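(* Let $\mathcal C$ be a multi-Reedy category. Then $\Theta\mathcal C$ is a multi-Reedy category with inverse subcategory $(\Theta\mathcal C)^-$, direct sub-multicategory $(\Theta\mathcal C)^+( * )$ and degree function $\deg([m](c_1,\dots,c_m))=m+\sum_{i=1}^m\deg(c_i)$, as defined in the context. In particular, $\Theta\mathcal C$ admits the structure of a Reedy category.
   Context: Multimorphisms: for a small category $\mathcal C$ and objects $c,d_1,\dots,d_m$ ($m\ge0$), a multimorphism $c\to d_1,\dots,d_m$ is a tuple $(\alpha_s\colon c\to d_s)_{s=1..m}$ of morphisms of $\mathcal C$ (for $m=0$ there is exactly one). These form a symmetric multicategory $\mathcal C( * )$ (composition: precomposition with a morphism, and postcomposition of each output $d_s$ with a multimorphism out of $d_s$, collecting all outputs; outputs can be permuted); a wide sub-multicategory contains all objects and identities and is closed under these operations. A multi-Reedy category is a small category $\mathcal C$ with a wide subcategory $\mathcal C^-$, a wide sub-multicategory $\mathcal C^+( * )\subseteq\mathcal C( * )$, and $\deg\colon\mathrm{ob}(\mathcal C)\to\mathbb N$ such that: (1) every multimorphism $\alpha$ of $\mathcal C( * )$ factors uniquely as $\alpha=\alpha^+\alpha^-$ with $\alpha^-\colon c\to x$ a morphism in $\mathcal C^-$ and $\alpha^+\colon x\to d_1,\dots,d_m$ in $\mathcal C^+( * )$; (2) every multimorphism $c\to d_1,\dots,d_m$ in $\mathcal C^+( * )$ satisfies $\deg(c)\le\sum_i\deg(d_i)$; a morphism $c\to d$ in $\mathcal C^+=\mathcal C\cap\mathcal C^+( * )$ has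 $\deg c=\deg d$ iff it is an identity; a morphism $c\to d$ in $\mathcal C^-$ has $\deg c\ge\deg d$, with equality iff it is an identity. A Reedy category is the analogous structure with only single-output morphisms (unique factorization $\alpha=\alpha^+\alpha^-$, $\deg$ non-decreasing along $\mathcal C^+$, non-increasing along $\mathcal C^-$, equality iff identity). $\Delta$ is the category of the totally ordered sets $[n]=\{0<1<\dots<n\}$, $n\ge0$, and order-preserving maps. $\Delta^-$ is the subcategory of surjections; $\Delta^+( * )$ consists of the multimorphisms $(\alpha_s\colon[m]\to[n_s])_s$ forming a monomorphic family (if $\alpha_s\beta=\alpha_s\beta'$ for all $s$ then $\beta=\beta'$). $\Theta\mathcal C$: objects are $[m](c_1,\dots,c_m)$ with $m\ge0$ and $c_i\in\mathrm{ob}\,\mathcal C$. A morphism $[m](c_1,\dots,c_m)\to[n](d_1,\dots,d_n)$ is $(\alpha,\{f_i\})$ where $\alpha\colon[m]\to[n]$ is in $\Delta$ and, for each $i=1,\dots,m$, $f_i=(f_{ij}\colon c_i\to d_j)_{\alpha(i-1)<j\le\alpha(i)}$ is a multimorphism of $\mathcal C( * )$. Composition: $(\beta,\{g_j\})\circ(\alpha,\{f_i\})=(\beta\alpha,\{h_i\})$ with $h_{ik}=g_{jk}f_{ij}$ for $\alpha(i-1)<j\le\alpha(i)$, $\beta(j-1)<k\le\beta(j)$. $(\Theta\mathcal C)^-$: morphisms $(\alpha,\{f_i\})$ such that $\alpha\in\Delta^-$ and, for each $i$ with $\alpha(i-1)<\alpha(i)$, the morphism $f_i\colon c_i\to d_{\alpha(i)}$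 is in $\mathcal C^-$. $(\Theta\mathcal C)^+( * )$: multimorphisms $(f_s)_{s=1..u}$ with $f_s=(\alpha_s,\{f_{si}\})\colon[m](c_1,\dots,c_m)\to[n_s](d_{s1},\dots,d_{sn_s})$ such that $(\alpha_s)_s\colon[m]\to[n_1],\dots,[n_u]$ is in $\Delta^+( * )$ and, for each $i=1,\dots,m$, the multimorphism $(f_{sij}\colon c_i\to d_{sj})_{s=1..u,\ \alpha_s(i-1)<j\le\alpha_s(i)}$ is in $\mathcal C^+( * )$. *)

(* Defs.v *)
From HB Require Import structures.
From mathcomp Require Import all_boot.
From mathcomp Require Import zify.
From Stdlib Require Import Permutation.

Set Implicit Arguments.
Unset Strict Implicit.
Unset Printing Implicit Defensive.

Record catData := CatData {
  Ob : Type;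
  Hom : Ob -> Ob -> Type;
  idm : forall c : Ob, Hom c c;
  comp : forall a b c : Ob, Hom b c -> Hom a b -> Hom a c }.
Arguments Hom {_} _ _.
Arguments idm {_} _.
Arguments comp {_ _ _ _} _ _.

Definition is_category (C : catData) : Prop :=
  [/\ (forall (a b : Ob C) (f : Hom a b), comp (idm b) f = f),
      (forall (a b : Ob C) (f : Hom a b), comp f (idm a) = f) &
      (forall (a b c d : Ob C) (f : Hom a b) (g : Hom b c) (h : Hom c d),
          comp h (comp g f) = comp (comp h g) f)].

(* f : c -> d is an identity (in particular d = c) *)
Definition is_identity (C : catData) (c d : Ob C) (f : Hom c d) : Prop :=
  existT (fun e => Hom c e) d f = existT (fun e => Hom c e) c (idm c).

Definition wide_subcategory (C : catData)
  (P : forall a b : Ob C, Hom a b -> Prop) : Prop :=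
  (forall c, P c c (idm c)) /\
  (forall a b c (f : Hom a b) (g : Hom b c), P a b f -> P b c g -> P a c (comp g f)).

(* Multimorphisms c -> d_1,...,d_m : the list [(d_1,a_1);...;(d_m,a_m)].   *)
Definition mmor (C : catData) (c : Ob C) : Type := seq {d : Ob C & Hom c d}.

Definition mprecomp (C : catData) (b c : Ob C) (a : mmor c) (h : Hom b c) : mmor b :=
  map (fun p => existT (fun d => Hom b d) (projT1 p) (comp (projT2 p) h)) a.

(* composition in C(star): each output (d_s, a_s) of a multimorphism is paired
   with a multimorphism b_s out of d_s; the result is (b_sk a_s)_{s,k}.     *)
Definition mcomp (C : catData) (c : Ob C)
  (g : seq {p : {d : Ob C & Hom c d} & mmor (projT1 p)}) : mmor c :=
  flatten (map (fun q : {p : {d : Ob C & Hom c d} & mmor (projT1 p)} =>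
                 mprecomp (projT2 q) (projT2 (projT1 q))) g).

Definition wide_submulticategory (C : catData)
  (P : forall c : Ob C, mmor c -> Prop) : Prop :=
  [/\ (forall c, P c [:: existT (fun d => Hom c d) c (idm c)]),
      (forall c (g : seq {p : {d : Ob C & Hom c d} & mmor (projT1 p)}),
          P c (map (@projT1 _ _) g) ->
          List.Forall (fun q => P (projT1 (projT1 q)) (projT2 q)) g ->
          P c (mcomp g)) &
      (forall c (a a' : mmor c), Permutation a a' -> P c a -> P c a')].

Definition is_multi_reedy (C : catData) (Cm : forall a b : Ob C, Hom a b -> Prop)
  (Cp : forall c : Ob C, mmor c -> Prop) (deg : Ob C -> nat) : Prop :=
  [/\ is_category C, wide_subcategory Cm, wide_submulticategory Cp,
      (forall (c : Ob C) (a : mmor c),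
         exists! fa : {x : Ob C & (Hom c x * mmor x)%type},
           [/\ Cm c (projT1 fa) (projT2 fa).1, Cp (projT1 fa) (projT2 fa).2 &
               a = mprecomp (projT2 fa).2 (projT2 fa).1]) &
      [/\ (forall c (a : mmor c), Cp c a -> deg c <= \sum_(p <- a) deg (projT1 p)),
          (forall (c d : Ob C) (f : Hom c d), Cp c [:: existT (fun e => Hom c e) d f] ->
              (deg c = deg d <-> is_identity f)) &
          (forall (c d : Ob C) (f : Hom c d), Cm c d f ->
              deg d <= deg c /\ (deg c = deg d <-> is_identity f))]].

Definition is_reedy (C : catData) (Rm Rp : forall a b : Ob C, Hom a b -> Prop)
  (deg : Ob C -> nat) : Prop :=
  [/\ is_category C, wide_subcategory Rm, wide_subcategory Rp,
      (forall (a b : Ob C) (f : Hom a b),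
         exists! fa : {x : Ob C & (Hom a x * Hom x b)%type},
           [/\ Rm a (projT1 fa) (projT2 fa).1, Rp (projT1 fa) b (projT2 fa).2 &
               f = comp (projT2 fa).2 (projT2 fa).1]) &
      ((forall a b (f : Hom a b), Rp a b f ->
           deg a <= deg b /\ (deg a = deg b <-> is_identity f)) /\
       (forall a b (f : Hom a b), Rm a b f ->
           deg b <= deg a /\ (deg a = deg b <-> is_identity f)))].

Definition dmor (m n : nat) : Type :=
  {a : {ffun 'I_m.+1 -> 'I_n.+1} |
     [forall i : 'I_m.+1, forall j : 'I_m.+1, (i <= j) ==> (a i <= a j)]}.

Definition dapp m n (a : dmor m n) (i : 'I_m.+1) : 'I_n.+1 := (sval a) i.

Lemma dmono m n (a : dmor m n) (i j : 'I_m.+1) : i <= j -> dapp a i <= dapp a j.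
Proof. by move=> hij; move: (svalP a) => /forallP/(_ i)/forallP/(_ j)/implyP; apply. Qed.

Definition dcomp m n p (b : dmor n p) (a : dmor m n) : dmor m p.
Proof.
exists [ffun i => dapp b (dapp a i)].
apply/forallP => i; apply/forallP => j; apply/implyP => hij; rewrite !ffunE.
by apply: dmono; apply: dmono.
Defined.

Definition did m : dmor m m.
Proof. by exists [ffun i => i]; apply/forallP => i; apply/forallP => j; rewrite !ffunE; apply/implyP. Defined.

Definition dval m n (a : dmor m n) (k : nat) : nat := dapp a (inord k).
(* the indices j (0-based) with alpha(k) <= j < alpha(k+1), i.e. the paper's
   alpha(i-1) < j <= alpha(i) for i = k+1, j shifted by one *)
Definition drange m n (a : dmor m n) (k : nat) : seq nat :=
  iota (dval a k) (dval a k.+1 - dval a k).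

Definition dsurj m n (a : dmor m n) : Prop := forall j : 'I_n.+1, exists i, dapp a i = j.

Definition dmono_family m (fam : seq {n : nat & dmor m n}) : Prop :=
  forall k (b b' : dmor k m),
    (forall s, List.In s fam -> dcomp (projT2 s) b = dcomp (projT2 s) b') -> b = b'.

Lemma dval_comp m n p (b : dmor n p) (a : dmor m n) k :
  dval (dcomp b a) k = dval b (dval a k).
Proof. by rewrite /dval /dcomp /dapp /= ffunE inord_val. Qed.

Lemma dval_mono m n (a : dmor m n) j k : j <= k -> k <= m -> dval a j <= dval a k.
Proof. by move=> hjk hk; apply: dmono; rewrite !inordK; lia. Qed.

Lemma dval_le m n (a : dmor m n) k : dval a k <= n.
Proof. by rewrite /dval -ltnS ltn_ord. Qed.

Lemma telescope (fb : nat -> nat) a len :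
  (forall j k, a <= j -> j <= k -> k <= a + len -> fb j <= fb k) ->
  flatten [seq iota (fb j) (fb j.+1 - fb j) | j <- iota a len]
  = iota (fb a) (fb (a + len) - fb a).
Proof.
elim: len a => [|len IH] a H /=; first by rewrite addn0 subnn.
rewrite IH; last by move=> j k hj hjk hk; apply: H; lia.
have h1 : fb a <= fb a.+1 by apply: H; lia.
have h2 : fb a.+1 <= fb (a + len.+1) by apply: H; lia.
rewrite addSnnS.
rewrite -{2}(subnKC h1) -iotaD; congr iota; lia.
Qed.

Section Theta.
Variable C : catData.

(* the object [m](c_1,...,c_m) is the list [c_1;...;c_m], m = size *)
Definition thOb := seq (Ob C).
Definition obi (x : thOb) (i : 'I_(size x)) : Ob C := tnth (in_tuple x) i.
Arguments obi : clear implicits.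

(* a morphism (alpha, {f_i}); f_i is the list of (j, f_ij) for j in the
   range alpha(i-1) < j <= alpha(i), in increasing order of j *)
Record thHom (x y : thOb) := ThHom {
  th_a : dmor (size x) (size y);
  th_f : forall i : 'I_(size x), seq {j : 'I_(size y) & Hom (obi x i) (obi y j)};
  th_ok : [forall i : 'I_(size x),
             [seq nat_of_ord (projT1 p) | p <- th_f i] == drange th_a i] }.

Definition thcomp_f x y z (g : thHom y z) (f : thHom x y) (i : 'I_(size x)) :
  seq {k : 'I_(size z) & Hom (obi x i) (obi z k)} :=
  flatten [seq [seq existT (fun k => Hom (obi x i) (obi z k)) (projT1 q)
                      (comp (projT2 q) (projT2 p)) | q <- th_f g (projT1 p)]
          | p : {j : 'I_(size y) & Hom (obi x i) (obi y j)} <- th_f f i].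

Lemma thcomp_ok x y z (g : thHom y z) (f : thHom x y) :
  [forall i : 'I_(size x),
     [seq nat_of_ord (projT1 p) | p <- thcomp_f g f i]
       == drange (dcomp (th_a g) (th_a f)) i].
Proof.
apply/forallP => i; apply/eqP.
rewrite /thcomp_f map_flatten -map_comp.
transitivity (flatten [seq drange (th_a g) (nat_of_ord (projT1 p)) | p <- th_f f i]).
  congr flatten; apply: eq_map => p /=.
  rewrite -map_comp -(eqP (forallP (th_ok g) (projT1 p))).
  by apply: eq_map.
rewrite (map_comp (drange (th_a g)) (fun p => nat_of_ord (projT1 p))).
rewrite (eqP (forallP (th_ok f) i)).
rewrite {1}/drange /drange telescope; last first.
  move=> j k _ hjk hk; apply: dval_mono => //.
  apply: leq_trans hk _.
  have : dval (th_a f) i <= dval (th_a f) i.+1 by apply: dval_mono; have := ltn_ord i; lia.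
  have := dval_le (th_a f) i.+1; lia.
rewrite !dval_comp subnKC //; apply: dval_mono; have := ltn_ord i; lia.
Qed.

Definition thcomp x y z (g : thHom y z) (f : thHom x y) : thHom x z :=
  ThHom (thcomp_ok g f).

Lemma thid_ok x :
  [forall i : 'I_(size x),
     [seq nat_of_ord (projT1 p)
        | p <- [:: existT (fun j : 'I_(size x) => Hom (obi x i) (obi x j)) i (idm (obi x i))]]
       == drange (did (size x)) i].
Proof.
apply/forallP => i; rewrite /drange /dval /dapp /= !ffunE !inordK; try (have := ltn_ord i; lia).
by rewrite subSnn.
Qed.

Definition thid x : thHom x x := ThHom (thid_ok x).

End Theta.
Arguments obi {C} x i.

Definition ThetaC (C : catData) : catData := @CatData (thOb C) (@thHom C) (@thid C) (@thcomp C).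

Definition ThetaMinus (C : catData) (Cm : forall a b : Ob C, Hom a b -> Prop) :
  forall x y : Ob (ThetaC C), Hom x y -> Prop :=
  fun x y (f : thHom x y) =>
    dsurj (th_a f) /\
    forall i : 'I_(size x), List.Forall (fun p : {j : 'I_(size y) & Hom (obi x i) (obi y j)} =>
                   Cm _ _ (projT2 p)) (th_f f i).

Definition ThetaPlus (C : catData) (Cp : forall c : Ob C, mmor c -> Prop) :
  forall x : Ob (ThetaC C), mmor x -> Prop :=
  fun x fam =>
    dmono_family [seq existT (fun n => dmor (size x) n) (size (projT1 s)) (th_a (projT2 s))
                 | s : {y : thOb C & thHom x y} <- fam] /\
    forall i : 'I_(size x),
      Cp (obi x i)
         (flatten [seq [seq existT (fun d => Hom (obi x i) d) (obi (projT1 s) (projT1 q)) (projT2 q)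
                       | q <- th_f (projT2 s) i]
                  | s : {y : thOb C & thHom x y} <- fam]).

Definition theta_deg (C : catData) (deg : Ob C -> nat) (x : Ob (ThetaC C)) : nat :=
  size x + \sum_(c <- x) deg c.

(* Main.v *)
Require Import Defs.
From HB Require Import structures.
From mathcomp Require Import all_boot.
From Stdlib Require Import Permutation.
From mathcomp Require Import zify.
From Stdlib Require Import Eqdep ClassicalEpsilon FunctionalExtensionality.
Require Import Defs.

Set Implicit Arguments.
Unset Strict Implicit.
Unset Printing Implicit Defensive.

Lemma sigT_fun (A : Type) (P : A -> Type) (R : Type) (F : forall a, P a -> R)
  a a' (p : P a) (p' : P a') : existT P a p = existT P a' p' -> F a p = F a' p'.
Proof. by move=> e; move: (f_equal (fun s => F (projT1 s) (projT2 s)) e). Qed.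

Lemma sigT_map (A : Type) (P Q : A -> Type) (F : forall a, P a -> Q a)
  a a' (p : P a) (p' : P a') : existT P a p = existT P a' p' ->
  existT Q a (F a p) = existT Q a' (F a' p').
Proof. by move=> e; move: (f_equal (fun s => existT Q (projT1 s) (F _ (projT2 s))) e). Qed.

Lemma sigT_pair (A : Type) (P Q : A -> Type) a a' (p : P a) (p' : P a') (q : Q a) (q' : Q a') :
  existT P a p = existT P a' p' -> existT Q a q = existT Q a' q' ->
  existT (fun a => (P a * Q a)%type) a (p, q) = existT _ a' (p', q').
Proof.
move=> e1 e2; have ea : a = a' by exact: (f_equal (@projT1 _ _) e1).
subst a'; move: (inj_pair2 _ _ _ _ _ e1) (inj_pair2 _ _ _ _ _ e2) => -> -> //.
Qed.

Lemma sigT_prop (A : Type) (P : A -> Type) (Q : forall a, P a -> Prop)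
  a a' (p : P a) (p' : P a') : existT P a p = existT P a' p' -> Q a' p' -> Q a p.
Proof.
move=> e; have ea : a = a' by exact: (f_equal (@projT1 _ _) e).
by subst a'; move: (inj_pair2 _ _ _ _ _ e) => ->.
Qed.

Lemma sigT_transport (A : Type) (P : A -> Type) a a' (e : a' = a) (p : P a) :
  exists p' : P a', existT P a' p' = existT P a p.
Proof. by subst a'; exists p. Qed.

Lemma dep_choice (I : Type) (T : I -> Type) (R : forall i, T i -> Prop) :
  (forall i, exists t, R i t) -> exists f : forall i, T i, forall i, R i (f i).
Proof.
move=> H; exists (fun i => proj1_sig (constructive_indefinite_description _ (H i))).
by move=> i; exact: (proj2_sig (constructive_indefinite_description _ (H i))).
Qed.

Lemma In_map (A B : Type) (f : A -> B) (s : seq A) y :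
  List.In y (map f s) <-> exists x, f x = y /\ List.In x s.
Proof.
elim: s y => [|a s IH] y /=; first by split=> // [[x []]].
split.
- case=> [<-|/IH [x [<- hx]]]; first by exists a; split=> //; left.
  by exists x; split=> //; right.
- case=> x [<- [->|hx]]; first by left.
  by right; apply/IH; exists x.
Qed.

Lemma In_nth (A : Type) (d : A) (s : seq A) y :
  List.In y s <-> exists n, n < size s /\ nth d s n = y.
Proof.
elim: s y => [|a s IH] y /=; first by split=> // [[n []]].
split.
- case=> [<-|/IH [n [hn <-]]]; first by exists 0.
  by exists n.+1; split.
- by case=> [[|n]] [hn <-]; [left|right; apply/IH; exists n].
Qed.

Lemma Forall_flatten (A : Type) (P : A -> Prop) (ss : seq (seq A)) :
  (forall s, List.In s ss -> List.Forall P s) -> List.Forall P (flatten ss).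
Proof.
elim: ss => [|s ss IH] //= H; apply/List.Forall_app; split; first by apply: H; left.
by apply: IH => t ht; apply: H; right.
Qed.

Lemma Forall_map (A B : Type) (P : B -> Prop) (f : A -> B) (s : seq A) :
  (forall x, List.In x s -> P (f x)) -> List.Forall P (map f s).
Proof.
elim: s => [|a s IH] //= H; constructor; first by apply: H; left.
by apply: IH => t ht; apply: H; right.
Qed.

Lemma Forall_In (A : Type) (P : A -> Prop) s x : List.Forall P s -> List.In x s -> P x.
Proof. by move=> /List.Forall_forall; apply. Qed.

Lemma cat_app (A : Type) (s t : seq A) : s ++ t = List.app s t.
Proof. by elim: s => //= a s ->. Qed.

Lemma Perm_flatten_app (A : Type) (T : Type) (F G : T -> seq A) (s : seq T) :
  Permutation (flatten [seq F t ++ G t | t <- s]) (flatten (map F s) ++ flatten (map G s)).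
Proof.
elim: s => [|t s IH] //=.
rewrite -!catA !cat_app; apply: Permutation_app_head.
apply: Permutation_trans; first by apply: Permutation_app_head; rewrite -?cat_app; exact: IH.
rewrite -!cat_app !catA !cat_app; apply: Permutation_app_tail; exact: Permutation_app_comm.
Qed.

Lemma Perm_flatten_swap (A J T : Type) (X : J -> T -> seq A) (sj : seq J) (st : seq T) :
  Permutation (flatten [seq flatten [seq X j t | t <- st] | j <- sj])
              (flatten [seq flatten [seq X j t | j <- sj] | t <- st]).
Proof.
elim: sj => [|j sj IH] /=.
  by elim: st => //.
apply: Permutation_trans; first by apply: Permutation_app_head; exact: IH.
apply: Permutation_sym.
exact: (Perm_flatten_app (fun t => X j t) (fun t => flatten [seq X j0 t | j0 <- sj]) st).
Qed.

Lemma Perm_flatten_map (A T : Type) (F G : T -> seq A) (s : seq T) :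
  (forall t, Permutation (F t) (G t)) ->
  Permutation (flatten (map F s)) (flatten (map G s)).
Proof. move=> H; elim: s => //= t s IH; exact: Permutation_app. Qed.

Lemma Perm_map (A B : Type) (f : A -> B) s s' :
  Permutation s s' -> Permutation (map f s) (map f s').
Proof.
elim=> //= [x l l' _ IH|x y l|l l' l'' _ IH1 _ IH2].
- by constructor.
- by constructor.
- exact: Permutation_trans IH1 IH2.
Qed.

Lemma Perm_flatten (A : Type) (ss ss' : seq (seq A)) :
  Permutation ss ss' -> Permutation (flatten ss) (flatten ss').
Proof.
elim=> //= [x l l' _ IH|x y l|l l' l'' _ IH1 _ IH2].
- exact: Permutation_app_head.
- rewrite !catA !cat_app; apply: Permutation_app_tail; exact: Permutation_app_comm.
- exact: Permutation_trans IH1 IH2.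
Qed.

Set Implicit Arguments.
Unset Strict Implicit.
Unset Printing Implicit Defensive.

Lemma dmor_eq m n (a b : dmor m n) :
  (forall k, k <= m -> dval a k = dval b k) -> a = b.
Proof.
case: a b => [a Ha] [b Hb] H.
have e : a = b.
  apply/ffunP => i; apply: val_inj.
  have := H i (ltnSE (ltn_ord i)); by rewrite /dval /dapp /= inord_val.
subst b; congr exist; exact: eq_irrelevance.
Qed.

Lemma dval_dapp m n (a : dmor m n) (i : 'I_m.+1) : dval a i = dapp a i.
Proof. by rewrite /dval inord_val. Qed.

Definition mk_dmor m n (f : nat -> nat)
  (Hm : forall i j, i <= j -> j <= m -> f i <= f j) (Hb : forall i, i <= m -> f i <= n) :
  dmor m n.
Proof.
exists [ffun i : 'I_m.+1 => (inord (f i) : 'I_n.+1)].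
apply/forallP => i; apply/forallP => j; apply/implyP => hij; rewrite !ffunE.
have hi := ltnSE (ltn_ord i); have hj := ltnSE (ltn_ord j).
rewrite !inordK ?ltnS ?Hb //; exact: Hm.
Defined.

Lemma dval_mk m n f Hm Hb k : k <= m -> dval (@mk_dmor m n f Hm Hb) k = f k.
Proof.
move=> hk; have e : nat_of_ord (inord k : 'I_m.+1) = k by rewrite inordK // ltnS.
by rewrite /dval /dapp /= ffunE e inordK // ltnS Hb.
Qed.

Lemma dval_did m k : k <= m -> dval (did m) k = k.
Proof. by move=> hk; rewrite /dval /dapp /= ffunE inordK // ltnS. Qed.

Lemma dval_le' m n (a : dmor m n) k : dval a k <= n.
Proof. exact: dval_le. Qed.

Lemma mem_drange m n (a : dmor m n) k j : j \in drange a k -> j < n.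
Proof.
rewrite /drange mem_iota => /andP [h1 h2].
have := dval_le a k.+1; lia.
Qed.

Lemma dsurj_dval m n (a : dmor m n) :
  dsurj a <-> forall j, j <= n -> exists i, i <= m /\ dval a i = j.
Proof.
split.
- move=> H j hj; case: (H (inord j)) => i hi; exists i; split; first exact: ltnSE (ltn_ord i).
  by rewrite dval_dapp hi inordK // ltnS.
- move=> H j; case: (H j (ltnSE (ltn_ord j))) => i [hi e].
  by exists (inord i); apply: ord_inj; rewrite -e /dval.
Qed.

Definition dpinj m (fam : seq {n : nat & dmor m n}) : Prop :=
  forall i i', i <= m -> i' <= m ->
   (forall s, List.In s fam -> dval (projT2 s) i = dval (projT2 s) i') -> i = i'.

Definition dconst m n (j : nat) (hj : j <= n) : dmor m n :=
  @mk_dmor m n (fun _ => j) (fun _ _ _ _ => leqnn j) (fun _ _ => hj).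

Lemma dmono_pinj m fam : dmono_family fam <-> @dpinj m fam.
Proof.
split.
- move=> H i i' hi hi' E.
  have := H 0 (dconst 0 hi) (dconst 0 hi').
  have Hc : forall s, List.In s fam -> dcomp (projT2 s) (dconst 0 hi) = dcomp (projT2 s) (dconst 0 hi').
    move=> s hs; apply: dmor_eq => k hk; rewrite !dval_comp !dval_mk //; exact: E.
  move=> /(_ Hc) e.
  have := f_equal (fun b => dval b 0) e; rewrite !dval_mk //.
- move=> H k b b' E; apply: dmor_eq => j hj; apply: H; try exact: dval_le.
  by move=> s hs; rewrite -!dval_comp (E s hs).
Qed.

Section ThetaBasics.
Variable C : catData.
Implicit Types x y z : thOb C.

Definition encp x y (i : 'I_(size x)) (p : {j : 'I_(size y) & Hom (obi x i) (obi y j)}) :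
  nat * {d : Ob C & Hom (obi x i) d} :=
  (nat_of_ord (projT1 p), existT _ (obi y (projT1 p)) (projT2 p)).

Definition enc_f x y (f : thHom x y) (i : 'I_(size x)) := map (@encp x y i) (th_f f i).

Lemma encp_inj x y i : injective (@encp x y i).
Proof.
case=> [j h] [j' h'] E.
have /= /ord_inj ej := f_equal fst E; subst j'.
have /= e := f_equal snd E.
by rewrite (inj_pair2 _ _ _ _ _ e).
Qed.

Lemma thHom_eq x y (f g : thHom x y) :
  th_a f = th_a g -> (forall i, th_f f i = th_f g i) -> f = g.
Proof.
case: f g => [a F ok] [b G ok'] /= eab eFG; subst b.
have e : F = G by apply: functional_extensionality_dep.
subst G; congr ThHom; exact: eq_irrelevance.
Qed.

Lemma thHom_ext x y (f g : thHom x y) :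
  (forall k, k <= size x -> dval (th_a f) k = dval (th_a g) k) ->
  (forall i, enc_f f i = enc_f g i) -> f = g.
Proof.
move=> Ha Hf; apply: thHom_eq; first exact: dmor_eq.
by move=> i; apply: (inj_map (@encp_inj x y i)); exact: Hf.
Qed.

Lemma enc_fst x y (f : thHom x y) i : map fst (enc_f f i) = drange (th_a f) i.
Proof. by rewrite /enc_f -map_comp -(eqP (forallP (th_ok f) i)). Qed.

Definition ent_ok y (c : Ob C) (e : nat * {d : Ob C & Hom c d}) : Prop :=
  exists j : 'I_(size y), nat_of_ord j = e.1 /\ projT1 e.2 = obi y j.

Lemma enc_obj x y (f : thHom x y) i : List.Forall (@ent_ok y (obi x i)) (enc_f f i).
Proof. by apply: Forall_map => [[j h]] _ /=; exists j. Qed.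

Lemma enc_build_list x y i (L : seq (nat * {d : Ob C & Hom (obi x i) d})) :
  List.Forall (@ent_ok y (obi x i)) L ->
  exists L' : seq {j : 'I_(size y) & Hom (obi x i) (obi y j)}, map (@encp x y i) L' = L.
Proof.
elim: L => [|[n [d h]] L IH] H; first by exists [::].
inversion H as [|e l [j [hj hd]] HL]; subst.
case: (IH HL) => L' eL.
simpl in hd, hj; subst d n.
by exists (existT _ j h :: L'); rewrite /= eL.
Qed.

Lemma thHom_build x y (a : dmor (size x) (size y))
  (E : forall i : 'I_(size x), seq (nat * {d : Ob C & Hom (obi x i) d})) :
  (forall i, map fst (E i) = drange a i) ->
  (forall i, List.Forall (@ent_ok y (obi x i)) (E i)) ->
  exists f : thHom x y, th_a f = a /\ forall i, enc_f f i = E i.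
Proof.
move=> Hfst Hobj.
have H : forall i, exists L' : seq {j : 'I_(size y) & Hom (obi x i) (obi y j)},
    map (@encp x y i) L' = E i.
  by move=> i; apply: enc_build_list.
case: (dep_choice H) => F HF.
have ok : [forall i : 'I_(size x), [seq nat_of_ord (projT1 p) | p <- F i] == drange a i].
  apply/forallP => i; apply/eqP; rewrite -Hfst -HF -map_comp //.
by exists (ThHom ok).
Qed.

Lemma enc_comp x y z (g : thHom y z) (f : thHom x y) i :
  enc_f (thcomp g f) i =
  flatten [seq [seq (q.1, existT (fun d => Hom (obi x i) d) (projT1 q.2) (comp (projT2 q.2) (projT2 p)))
                | q : nat * {d : Ob C & Hom (obi y (projT1 p)) d} <- enc_f g (projT1 p)]
           | p : {j : 'I_(size y) & Hom (obi x i) (obi y j)} <- th_f f i].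
Proof.
rewrite /enc_f /= /thcomp_f map_flatten -map_comp; congr flatten; apply: eq_map => p /=.
by rewrite -!map_comp.
Qed.

Lemma th_a_comp x y z (g : thHom y z) (f : thHom x y) :
  th_a (thcomp g f) = dcomp (th_a g) (th_a f).
Proof. by []. Qed.

Lemma flatten_map_seq1 (A B : Type) (f : A -> B) (s : seq A) :
  flatten [seq [:: f a] | a <- s] = map f s.
Proof. by elim: s => //= a s ->. Qed.

Lemma flatten_bind_assoc (A B D : Type) (s : seq A) (H : A -> seq B) (G : B -> seq D) :
  flatten (map G (flatten (map H s))) = flatten (map (fun a => flatten (map G (H a))) s).
Proof. by elim: s => //= a s IH; rewrite map_cat flatten_cat IH. Qed.

Lemma theta_is_category : is_category C -> is_category (ThetaC C).
Proof.
case=> idl idr ass; split.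
- move=> a b f; apply: thHom_eq.
    by apply: dmor_eq => k hk; rewrite /= dval_comp dval_did // dval_le.
  move=> i /=; rewrite /thcomp_f /= flatten_map_seq1.
  by rewrite -[RHS]map_id; apply: eq_map => -[j h] /=; rewrite idl.
- move=> a b f; apply: thHom_eq.
    by apply: dmor_eq => k hk; rewrite /= dval_comp dval_did.
  move=> i /=; rewrite /thcomp_f /= cats0.
  by rewrite -[RHS]map_id; apply: eq_map => -[j h] /=; rewrite idr.
- move=> a b c d f g h; apply: thHom_eq.
    by apply: dmor_eq => k hk; rewrite /= !dval_comp.
  move=> i /=; rewrite /thcomp_f /= flatten_bind_assoc; congr flatten.
  apply: eq_map => p0 /=; rewrite map_flatten -!map_comp; congr flatten.
  apply: eq_map => q /=; rewrite -map_comp; apply: eq_map => r /=.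
  by rewrite ass.
Qed.
End ThetaBasics.

Set Implicit Arguments.
Unset Strict Implicit.
Unset Printing Implicit Defensive.

Lemma In_flatten (A : Type) (ss : seq (seq A)) x :
  List.In x (flatten ss) <-> exists l, List.In l ss /\ List.In x l.
Proof.
elim: ss => [|l ss IH] /=; first by split=> // [[l []]].
rewrite cat_app; split.
- move=> hx; case: (List.in_app_or l (flatten ss) x hx) => [h|/IH [l' [h1 h2]]].
    by exists l; split=> //; left.
  by exists l'; split=> //; right.
- case=> l' [[<-|h1] h2]; apply: List.in_or_app; first by left.
  by right; apply/IH; exists l'.
Qed.

Section Sub.
Variable C : catData.
Unset Implicit Arguments.
Variable Cm : forall a b : Ob C, Hom a b -> Prop.
Variable Cp : forall c : Ob C, mmor c -> Prop.
Set Implicit Arguments.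
Implicit Types x y z : thOb C.

Lemma theta_minus_wide : wide_subcategory Cm -> wide_subcategory (ThetaMinus Cm).
Proof.
case=> Hid Hcomp; split.
- move=> x; split.
    by apply/dsurj_dval => j hj; exists j; rewrite dval_did.
  by move=> i /=; constructor; [exact: Hid|constructor].
- move=> x y z f g [sf Ff] [sg Fg]; split.
    apply/dsurj_dval => j hj; move/dsurj_dval: sg => sg; case: (sg j hj) => k [hk <-].
    move/dsurj_dval: sf => sf; case: (sf k hk) => i [hi <-].
    by exists i; rewrite /= dval_comp.
  move=> i /=; rewrite /thcomp_f; apply: Forall_flatten => l.
  case/In_map => p [<- hp]; apply: Forall_map => q hq /=.
  apply: Hcomp; first exact: (Forall_In (Ff i) hp).
  exact: (Forall_In (Fg (projT1 p)) hq).
Qed.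

Definition TPlist x (fam : mmor (x : Ob (ThetaC C))) (i : 'I_(size x)) : mmor (obi x i) :=
  flatten [seq map snd (enc_f (projT2 s) i) | s <- fam].

Definition TPpinj x (fam : mmor (x : Ob (ThetaC C))) : Prop :=
  forall i i', i <= size x -> i' <= size x ->
   (forall s, List.In s fam -> dval (th_a (projT2 s)) i = dval (th_a (projT2 s)) i') -> i = i'.

Lemma ThetaPlusE x (fam : mmor (x : Ob (ThetaC C))) :
  ThetaPlus Cp fam <-> TPpinj fam /\ forall i, Cp (obi x i) (TPlist fam i).
Proof.
have eL : forall i, TPlist fam i = flatten [seq [seq existT (fun d => Hom (obi x i) d)
      (obi (projT1 s) (projT1 q)) (projT2 q) | q <- th_f (projT2 s) i] | s <- fam].
  by move=> i; rewrite /TPlist; congr flatten; apply: eq_map => s; rewrite /enc_f -map_comp.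
have eP : dmono_family [seq existT (fun n => dmor (size x) n) (size (projT1 s)) (th_a (projT2 s))
                 | s : {y : thOb C & thHom x y} <- fam] <-> TPpinj fam.
  rewrite dmono_pinj; split.
  - move=> H i i' hi hi' E; apply: H => // s /In_map [s' [<- hs']]; exact: E.
  - move=> H i i' hi hi' E; apply: H => // s hs; apply: (E (existT _ _ _)).
    by apply/In_map; exists s.
split.
- by case=> /eP h1 h2; split=> // i; rewrite eL.
- by case=> /eP h1 h2; split=> // i; rewrite -eL.
Qed.

Lemma theta_plus_wide : wide_submulticategory Cp -> wide_submulticategory (ThetaPlus Cp).
Proof.
case=> Hid Hcomp Hperm; split.
- move=> x; apply/ThetaPlusE; split.
    move=> i i' hi hi' E; have := E (existT _ x (thid x)) (or_introl erefl).
    by rewrite /= !dval_did.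
  by move=> i; exact: Hid.
- move=> x g /ThetaPlusE [Pinj PCp] HF; apply/ThetaPlusE; split.
  + move=> i i' hi hi' E; apply: Pinj => // s /In_map [q [<- hq]].
    have Hq := Forall_In HF hq; case/ThetaPlusE: Hq => Qinj _.
    apply: Qinj; try exact: dval_le.
    move=> t ht; rewrite -!dval_comp.
    apply: (E (existT _ (projT1 t) (thcomp (projT2 t) (projT2 (projT1 q))))).
    apply/In_flatten; exists (mprecomp (projT2 q) (projT2 (projT1 q))); split.
      by apply/In_map; exists q.
    by apply/In_map; exists t.
  + move=> i.
    set gg := flatten [seq [seq existT (fun p : {d : Ob C & Hom (obi x i) d} => mmor (projT1 p))
                 (existT (fun d => Hom (obi x i) d) (obi (projT1 (projT1 q)) (projT1 e)) (projT2 e))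
                 (TPlist (projT2 q) (projT1 e)) | e <- th_f (projT2 (projT1 q)) i] | q <- g].
    have H1 : Cp (obi x i) (mcomp gg).
      apply: Hcomp.
        have -> : map (@projT1 _ _) gg = TPlist (map (@projT1 _ _) g) i.
          rewrite /gg /TPlist map_flatten -!map_comp; congr flatten; apply: eq_map => q /=.
          by rewrite /enc_f -!map_comp.
        exact: PCp.
      apply: Forall_flatten => l /In_map [q [<- hq]]; apply: Forall_map => e he /=.
      by case/ThetaPlusE: (Forall_In HF hq) => _; apply.
    apply: Hperm H1.
    rewrite /mcomp /gg /TPlist /=.
    rewrite !flatten_bind_assoc.
    eapply Perm_flatten_map => q /=.
    set X := fun (e : {j : 'I_(size (projT1 (projT1 q))) & Hom (obi x i) (obi (projT1 (projT1 q)) j)})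
               (s : {w : thOb C & thHom (projT1 (projT1 q)) w}) =>
      [seq existT (fun d => Hom (obi x i) d) (projT1 r.2) (comp (projT2 r.2) (projT2 e))
          | r <- enc_f (projT2 s) (projT1 e)].
    apply: (Permutation_trans (l' := flatten [seq flatten [seq X e s | s <- projT2 q]
                                               | e <- th_f (projT2 (projT1 q)) i])).
      apply: Permutation_refl'; rewrite -map_comp; congr (foldr _ _); apply: eq_map => e /=.
      rewrite /mprecomp map_flatten -map_comp; congr flatten; apply: eq_map => s /=.
      by rewrite /X -map_comp.
    apply: Permutation_trans; first exact: Perm_flatten_swap.
    apply: Permutation_refl'; rewrite /mprecomp -map_comp.
    congr (foldr _ _); apply: eq_map => s /=.
    rewrite enc_comp map_flatten -map_comp; congr flatten; apply: eq_map => e /=.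
    by rewrite /X -map_comp.
- move=> x a a' hp /ThetaPlusE [Pinj PCp]; apply/ThetaPlusE; split.
    move=> i i' hi hi' E; apply: Pinj => // s hs; apply: E.
    exact: Permutation_in hs.
  move=> i; apply: Hperm (PCp i); rewrite /TPlist.
  apply: Perm_flatten; exact: Perm_map.
Qed.

End Sub.

Set Implicit Arguments.
Unset Strict Implicit.
Unset Printing Implicit Defensive.

Section Deg.
Variable C : catData.
Unset Implicit Arguments.
Variable Cm : forall a b : Ob C, Hom a b -> Prop.
Variable Cp : forall c : Ob C, mmor c -> Prop.
Variable deg : Ob C -> nat.
Set Implicit Arguments.
Implicit Types x y z : thOb C.

Definition dg y (j : nat) := nth 0 (map deg y) j.

Lemma dgE y (j : 'I_(size y)) : deg (obi y j) = dg y j.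
Proof.
rewrite /dg /obi (tnth_nth (tnth (in_tuple y) j)) /= (nth_map (tnth (in_tuple y) j)) //.
Qed.

Lemma sum_obj y : \sum_(c <- y) deg c = \sum_(j < size y) deg (obi y j).
Proof. by rewrite big_tnth. Qed.

Lemma theta_degE y : theta_deg deg y = size y + \sum_(j < size y) dg y j.
Proof. by rewrite /theta_deg sum_obj; congr addn; apply: eq_bigr => j _; rewrite dgE. Qed.

Lemma sum_enc x y (f : thHom x y) i :
  \sum_(e <- enc_f f i) deg (projT1 e.2) = \sum_(j <- drange (th_a f) i) dg y j.
Proof.
rewrite /enc_f big_map -(eqP (forallP (th_ok f) i)) big_map.
by apply: eq_bigr => p _; rewrite /= dgE.
Qed.

Lemma sum_TPlist x (fam : mmor (x : Ob (ThetaC C))) i :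
  \sum_(p <- TPlist fam i) deg (projT1 p) =
  \sum_(s <- fam) \sum_(j <- drange (th_a (projT2 s)) i) dg (projT1 s) j.
Proof.
rewrite /TPlist big_flatten big_map; apply: eq_bigr => s _.
by rewrite big_map -sum_enc.
Qed.

Lemma sum_ranges m n (a : dmor m n) (G : nat -> nat) :
  \sum_(i < m) \sum_(j <- drange a i) G j = \sum_(dval a 0 <= j < dval a m) G j.
Proof.
rewrite -(big_mkord xpredT (fun i => \sum_(j <- drange a i) G j)).
rewrite -(big_map (fun i => drange a i) xpredT (fun r => \sum_(j <- r) G j)) -big_flatten /=.
rewrite /index_iota subn0.
have := @telescope (dval a) 0 m; rewrite add0n /drange => ->; first by [].
move=> j k _ hjk hk; exact: dval_mono.
Qed.

Lemma sum_sub_range (G : nat -> nat) a b n :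
  a <= b -> b <= n -> \sum_(a <= j < b) G j <= \sum_(0 <= j < n) G j.
Proof.
move=> hab hbn; rewrite (big_cat_nat (n:=a) (m:=0) (p:=n)) //; last exact: leq_trans hbn.
rewrite (big_cat_nat (n:=b) (m:=a) (p:=n)) //=.
lia.
Qed.

Lemma dval0_surj m n (a : dmor m n) : dsurj a -> dval a 0 = 0.
Proof.
move/dsurj_dval => /(_ 0 (leq0n n)) [i [hi e]].
have := dval_mono a (leq0n i) hi; lia.
Qed.

Lemma dvalm_surj m n (a : dmor m n) : dsurj a -> dval a m = n.
Proof.
move/dsurj_dval => /(_ n (leqnn n)) [i [hi e]].
have := dval_mono a hi (leqnn m); have := dval_le a m; lia.
Qed.

Lemma dstep_surj m n (a : dmor m n) i : dsurj a -> i < m -> dval a i.+1 <= (dval a i).+1.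
Proof.
move=> hs him; rewrite leqNgt; apply/negP => hlt.
move/dsurj_dval: hs => /(_ (dval a i).+1) [].
  have := dval_le a i.+1; lia.
move=> k [hk e].
case: (leqP k i) => hki.
  have := dval_mono a hki (ltnW him); lia.
have := dval_mono a hki hk; lia.
Qed.

Lemma dle_surj m n (a : dmor m n) i : dsurj a -> i <= m -> dval a i <= i.
Proof.
move=> hs; elim: i => [|i IH] hi; first by rewrite dval0_surj.
have := dstep_surj hs hi; have := IH (ltnW hi); lia.
Qed.

Lemma drange_surj m n (a : dmor m n) (i : 'I_m) : dsurj a ->
  drange a i = if dval a i.+1 == dval a i then [::] else [:: dval a i].
Proof.
move=> hs; have := dstep_surj hs (ltn_ord i); have := dval_mono a (leqnSn i) (ltn_ord i).
rewrite /drange; case: eqP => [->|ne] h1 h2; first by rewrite subnn.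
by have -> : dval a i.+1 - dval a i = 1 by lia.
Qed.

Lemma dinj_strict m n (a : dmor m n) :
  (forall i i', i <= m -> i' <= m -> dval a i = dval a i' -> i = i') ->
  forall i, i <= m -> dval a 0 + i <= dval a i.
Proof.
move=> H; elim=> [|i IH] hi; first by rewrite addn0.
have h1 := IH (ltnW hi); have h2 := dval_mono a (leqnSn i) hi.
have : dval a i != dval a i.+1.
  by apply/eqP => e; have := H _ _ (ltnW hi) hi e; lia.
lia.
Qed.

Lemma sum_pointwise_eq (k : nat) (F G : nat -> nat) :
  (forall i, i < k -> F i <= G i) -> \sum_(i < k) F i = \sum_(i < k) G i ->
  forall i, i < k -> F i = G i.
Proof.
elim: k => [|k IH] hle heq i hi //.
have r1 : \sum_(i < k.+1) F i = \sum_(i < k) F i + F k by rewrite big_ord_recr.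
have r2 : \sum_(i < k.+1) G i = \sum_(i < k) G i + G k by rewrite big_ord_recr.
rewrite r1 r2 in heq.
have hs : \sum_(i < k) F i <= \sum_(i < k) G i.
  by apply: leq_sum => j _; apply: hle; apply: ltn_trans (ltn_ord j) _.
have hk := hle k (leqnn _).

have e1 : F k = G k by lia.
have e2 : \sum_(i < k) F i = \sum_(i < k) G i by lia.
case: (ltngtP i k) => hik; last by rewrite hik.
- by apply: IH => // j hj; apply: hle; lia.
- lia.
Qed.

Lemma obi_list_eq y x : size y = size x ->
  (forall i : 'I_(size x), exists j : 'I_(size y), nat_of_ord j = i /\ obi y j = obi x i) -> y = x.
Proof.
case: x => [|c x'] hs H; first by move: H; case: y hs.
apply: (@eq_from_nth _ c) => // n hn.
have hn' : n < size (c :: x') by rewrite -hs.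
case: (H (Ordinal hn')) => j [hj e].
move: e; rewrite /obi !(tnth_nth c) /= hj //.
Qed.

Lemma theta_identity x y (f : thHom x y) :
  size y = size x -> (forall k, k <= size x -> dval (th_a f) k = k) ->
  (forall i, enc_f f i = [:: (nat_of_ord i, existT (fun d => Hom (obi x i) d) (obi x i) (idm (obi x i)))]) ->
  is_identity (f : Hom (x : Ob (ThetaC C)) y).
Proof.
move=> hs ha he.
have exy : y = x.
  apply: obi_list_eq => // i.
  have := enc_obj f i; rewrite he => /List.Forall_forall /(_ _ (or_introl erefl)) [j [hj hd]].
  by exists j; split.
subst y; rewrite /is_identity; congr existT.
apply: thHom_ext => [k hk|i]; first by rewrite ha // dval_did.
by rewrite he.
Qed.

Lemma identity_size x y (f : thHom x y) : is_identity (f : Hom (x : Ob (ThetaC C)) y) -> y = x.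
Proof. by move=> e; exact: (f_equal (@projT1 _ _) e). Qed.

End Deg.

Set Implicit Arguments.
Unset Strict Implicit.
Unset Printing Implicit Defensive.

Lemma dinj_strict' m n (a : dmor m n) :
  (forall i i', i <= m -> i' <= m -> dval a i = dval a i' -> i = i') ->
  forall i k, i + k <= m -> dval a i + k <= dval a (i + k).
Proof.
move=> H i; elim=> [|k IH] hk; first by rewrite !addn0.
rewrite addnS in hk *.
have h1 := IH (ltnW hk).
have h2 := dval_mono a (leqnSn (i + k)) hk.
have : dval a (i + k) != dval a (i + k).+1.
  by apply/eqP => e; have := H _ _ (ltnW hk) hk e; lia.
lia.
Qed.

Lemma dsurj_step' m n (a : dmor m n) : dsurj a ->
  forall i k, i + k <= m -> dval a (i + k) <= dval a i + k.
Proof.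
move=> hs i; elim=> [|k IH] hk; first by rewrite !addn0.
rewrite addnS in hk *.
have := IH (ltnW hk); have := dstep_surj hs hk; lia.
Qed.

Lemma sum_le_seq (I : Type) (s : seq I) (F G : I -> nat) :
  (forall i, List.In i s -> F i <= G i) -> \sum_(i <- s) F i <= \sum_(i <- s) G i.
Proof.
elim: s => [|a s IH] hle; first by rewrite !big_nil.
rewrite !big_cons; apply: leq_add; first by apply: hle; left.
by apply: IH => i hi; apply: hle; right.
Qed.

Lemma sum_seq_pointwise (I : Type) (s : seq I) (F G : I -> nat) :
  (forall i, List.In i s -> F i <= G i) -> \sum_(i <- s) F i = \sum_(i <- s) G i ->
  forall i, List.In i s -> F i = G i.
Proof.
elim: s => [|a s IH] hle heq i //=; rewrite !big_cons in heq.
have hs : \sum_(i <- s) F i <= \sum_(i <- s) G i.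
  by apply: sum_le_seq => j hj; apply: hle; right.
have ha := hle a (or_introl erefl).
case=> [<-|hi]; first by lia.
apply: IH => //; first by move=> j hj; apply: hle; right.
lia.
Qed.

Section Deg2.
Variable C : catData.
Unset Implicit Arguments.
Variable Cm : forall a b : Ob C, Hom a b -> Prop.
Variable Cp : forall c : Ob C, mmor c -> Prop.
Variable deg : Ob C -> nat.
Hypothesis HC1 : forall c (a : mmor c), Cp c a -> deg c <= \sum_(p <- a) deg (projT1 p).
Hypothesis HC2 : forall (c d : Ob C) (f : Hom c d), Cp c [:: existT (fun e => Hom c e) d f] ->
              (deg c = deg d <-> is_identity f).
Hypothesis HC3 : forall (c d : Ob C) (f : Hom c d), Cm c d f ->
              deg d <= deg c /\ (deg c = deg d <-> is_identity f).
Set Implicit Arguments.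
Implicit Types x y z : thOb C.

Lemma enc_single x y (f : thHom x y) (i : 'I_(size x)) k : drange (th_a f) i = [:: k] ->
  exists (j : 'I_(size y)) (h : Hom (obi x i) (obi y j)),
    nat_of_ord j = k /\ th_f f i = [:: existT _ j h].
Proof.
move=> hr; have := eqP (forallP (th_ok f) i); rewrite hr.
case: (th_f f i) => [|[j h] [|p' l]] //= [e].
by exists j, h.
Qed.

Lemma enc_nil x y (f : thHom x y) (i : 'I_(size x)) : drange (th_a f) i = [::] -> th_f f i = [::].
Proof. by move=> hr; have := eqP (forallP (th_ok f) i); rewrite hr; case: (th_f f i). Qed.

Lemma plus_sumdeg x (fam : mmor (x : Ob (ThetaC C))) : ThetaPlus Cp fam ->
  \sum_(i < size x) dg deg x i <=
  \sum_(s <- fam) \sum_(dval (th_a (projT2 s)) 0 <= j < dval (th_a (projT2 s)) (size x)) dg deg (projT1 s) j.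
Proof.
case/ThetaPlusE => Pinj PCp.
apply: (@leq_trans (\sum_(i < size x) \sum_(s <- fam) \sum_(j <- drange (th_a (projT2 s)) i) dg deg (projT1 s) j)).
  apply: leq_sum => i _; rewrite -dgE -sum_TPlist; exact: HC1 _ _ _.
rewrite exchange_big /=; apply: leq_sum => s _; rewrite sum_ranges //.
Qed.

Lemma plus_deg x (fam : mmor (x : Ob (ThetaC C))) : ThetaPlus Cp fam ->
  theta_deg deg x <= \sum_(p <- fam) theta_deg deg (projT1 p).
Proof.
move=> HP; have HS := plus_sumdeg HP; case/ThetaPlusE: HP => Pinj PCp.
rewrite theta_degE.
have -> : \sum_(p <- fam) theta_deg deg (projT1 p) = \sum_(p <- fam) size (projT1 p) +
     \sum_(p <- fam) \sum_(j < size (projT1 p)) dg deg (projT1 p) j.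
  by rewrite -big_split; apply: eq_bigr => p _; rewrite theta_degE.
apply: leq_add.
- set T := fun i => \sum_(s <- fam) dval (th_a (projT2 s)) i.
  have hT : forall i, i <= size x -> T 0 + i <= T i.
    elim=> [|i IH] hi; first by rewrite addn0.
    have le : forall s, List.In s fam -> dval (th_a (projT2 s)) i <= dval (th_a (projT2 s)) i.+1.
      by move=> s _; apply: dval_mono.
    have leT : T i <= T i.+1 := sum_le_seq le.
    have neT : T i != T i.+1.
      apply/eqP => e; have := Pinj i i.+1 (ltnW hi) hi (sum_seq_pointwise le e); lia.
    have := IH (ltnW hi); lia.
  have := hT _ (leqnn _).
  have : T (size x) <= \sum_(s <- fam) size (projT1 s) by apply: sum_le_seq => s _; exact: dval_le.
  lia.
- apply: (leq_trans HS); apply: leq_sum => s _.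
  rewrite -(big_mkord xpredT (dg deg (projT1 s))).
  apply: sum_sub_range; [apply: dval_mono|apply: dval_le] => //.
Qed.

Lemma plus_identity x y (f : thHom x y) :
  ThetaPlus Cp [:: existT (fun e => Hom (x : Ob (ThetaC C)) e) y f] ->
  (theta_deg deg x = theta_deg deg y <-> is_identity (f : Hom (x : Ob (ThetaC C)) y)).
Proof.
move=> HP; split; last by move/identity_size => e; subst y.
have HS := plus_sumdeg HP; rewrite big_seq1 /= in HS.
case/ThetaPlusE: HP => Pinj PCp.
have inj : forall i i', i <= size x -> i' <= size x -> dval (th_a f) i = dval (th_a f) i' -> i = i'.
  by move=> i i' hi hi' e; apply: Pinj => // s [<-|].
have st := dinj_strict' inj.
have h0 := st 0 (size x); rewrite !add0n in h0; have := h0 (leqnn _) => {}h0.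
have hm := dval_le (th_a f) (size x).
have hsub : \sum_(dval (th_a f) 0 <= j < dval (th_a f) (size x)) dg deg y j <= \sum_(j < size y) dg deg y j.
  by rewrite -(big_mkord xpredT (dg deg y)); apply: sum_sub_range => //; apply: dval_mono.
rewrite !theta_degE => edeg.
set Sx := \sum_(j < size x) dg deg x j in edeg HS.
set Sy := \sum_(j < size y) dg deg y j in edeg hsub.
set Sr := \sum_(_ <= j < _) _ in HS hsub.
have esz : size y = size x by lia.
have a0 : dval (th_a f) 0 = 0 by lia.
have aid : forall k, k <= size x -> dval (th_a f) k = k.
  move=> k hk; have := st 0 k; have := st k (size x - k); rewrite add0n subnKC //; lia.
have dr : forall i : 'I_(size x), drange (th_a f) i = [:: nat_of_ord i].
  move=> i; rewrite /drange !aid //; last exact: ltnW.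
  by rewrite subSnn.
have ple : forall i, i < size x -> dg deg x i <= dg deg y i.
  move=> i hi; have := HC1 _ _ (PCp (Ordinal hi)); have := dr (Ordinal hi).
  by rewrite sum_TPlist big_seq1 /= => ->; rewrite big_seq1 dgE.
have eqs : \sum_(i < size x) dg deg x i = \sum_(i < size x) dg deg y i.
  have e1 : Sy = \sum_(i < size x) dg deg y i by rewrite /Sy esz.
  transitivity Sx; first by [].
  rewrite -e1; lia.
have pw := sum_pointwise_eq ple eqs.
apply: theta_identity => // i.
case: (enc_single (dr i)) => j [h [hj ef]].
have Hc := PCp i; rewrite /TPlist /= cats0 /enc_f ef /= in Hc.
have := (HC2 _ _ _ Hc).1; rewrite dgE dgE hj pw // => /(_ erefl) eid.
by rewrite /enc_f ef /encp /= hj eid.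
Qed.

Lemma minus_deg x y (f : thHom x y) : ThetaMinus Cm (f : Hom (x : Ob (ThetaC C)) y) ->
  theta_deg deg y <= theta_deg deg x /\
  (theta_deg deg x = theta_deg deg y <-> is_identity (f : Hom (x : Ob (ThetaC C)) y)).
Proof.
case=> hs HF.
have a0 := dval0_surj hs; have am := dvalm_surj hs.
have ale : forall i, i <= size x -> dval (th_a f) i <= i by move=> i; exact: dle_surj.
have nm : size y <= size x by rewrite -am; exact: ale.
have ple : forall i : 'I_(size x), \sum_(j <- drange (th_a f) i) dg deg y j <= dg deg x i.
  move=> i; rewrite drange_surj //; case: eqP => hne; first by rewrite big_nil.
  rewrite big_seq1; case: (enc_single (k := dval (th_a f) i) (f := f) (i := i)).
    by rewrite drange_surj //; case: eqP.
  move=> j [h [hj ef]]; have := HF i; rewrite ef => /List.Forall_forall /(_ _ (or_introl erefl)) /= hc.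
  by rewrite -hj -!dgE; exact: (HC3 _ _ _ hc).1.
have hsum : \sum_(j < size y) dg deg y j <= \sum_(i < size x) dg deg x i.
  rewrite -(big_mkord xpredT (dg deg y)); have := sum_ranges (th_a f) (dg deg y).
  by rewrite a0 am => <-; apply: leq_sum => i _.
rewrite !theta_degE; split; first by lia.
split; last by move/identity_size => e; subst y.
move=> edeg; have esz : size y = size x by lia.
have aid : forall k, k <= size x -> dval (th_a f) k = k.
  move=> k hk; have := @dsurj_step' _ _ (th_a f) hs k (size x - k); rewrite subnKC // am.
  have := ale k hk; lia.
have dr : forall i : 'I_(size x), drange (th_a f) i = [:: nat_of_ord i].
  move=> i; rewrite /drange !aid //; last exact: ltnW.
  by rewrite subSnn.
have ple' : forall i, i < size x -> dg deg y i <= dg deg x i.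
  by move=> i hi; have := ple (Ordinal hi); have := dr (Ordinal hi); rewrite /= => ->; rewrite big_seq1.
have eqs : \sum_(i < size x) dg deg y i = \sum_(i < size x) dg deg x i.
  set Sx := \sum_(j < size x) dg deg x j in edeg *.
  set Sy := \sum_(j < size y) dg deg y j in edeg.
  have e1 : Sy = \sum_(i < size x) dg deg y i by rewrite /Sy esz.
  rewrite -e1; lia.
have pw := sum_pointwise_eq ple' eqs.
apply: theta_identity => // i.
case: (enc_single (dr i)) => j [h [hj ef]].
have := HF i; rewrite ef => /List.Forall_forall /(_ _ (or_introl erefl)) /= hc.
have := (HC3 _ _ _ hc).2.1; rewrite dgE dgE hj pw // => /(_ erefl) eid.
by rewrite /enc_f ef /encp /= hj eid.
Qed.

End Deg2.

Unset Implicit Arguments.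

Lemma multi_to_reedy (D : catData) (Dm : forall a b : Ob D, Hom a b -> Prop)
  (Dp : forall c : Ob D, mmor c -> Prop) (deg : Ob D -> nat) :
  is_multi_reedy Dm Dp deg ->
  is_reedy Dm (fun a b f => Dp a [:: existT (fun e => Hom a e) b f]) deg.
Proof.
case=> Hcat Hm [Hid Hcomp Hperm] Hfac [Hd1 Hd2 Hd3]; split=> //.
- split=> // a b c f g hf hg.
  have := Hcomp a [:: existT (fun p : {d : Ob D & Hom a d} => mmor (projT1 p))
                      (existT (fun e => Hom a e) b f) [:: existT (fun e => Hom b e) c g]].
  by apply=> //; constructor.
- move=> a b f; case: (Hfac a [:: existT (fun e => Hom a e) b f]) => [[x [h P]]] /= [[hm hp eP] uniq].
  simpl in hm, hp, eP.
  case: P hp eP uniq => [|[b' g] [|q P]] //= hp [eb eP] uniq.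
  subst b'; have ef := inj_pair2 _ _ _ _ _ eP; subst f.
  exists (existT (fun x => (Hom a x * Hom x b)%type) x (h, g)); split; first by split.
  move=> [x' [h' g']] /= [hm' hp' ef].
  have := uniq (existT _ x' (h', [:: existT (fun e => Hom x' e) b g'])).
  rewrite /= ef => /(_ (And3 hm' hp' erefl)) e.
  have ex : x = x' by exact: (f_equal (@projT1 _ _) e).
  subst x'; have := inj_pair2 _ _ _ _ _ e => -[<-] eg.
  by rewrite (inj_pair2 _ _ _ _ _ eg).
- split=> a b f hf.
    by split; [have := Hd1 a _ hf; rewrite big_seq1|exact: Hd2].
  exact: Hd3.
Qed.

Set Implicit Arguments.
Unset Strict Implicit.
Unset Printing Implicit Defensive.

Fixpoint chunkz (A : Type) (rs : seq (seq nat)) (P : seq A) : seq (seq (nat * A)) :=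
  match rs with
  | [::] => [::]
  | r :: rs' => zip r (take (size r) P) :: chunkz rs' (drop (size r) P)
  end.

Lemma size_chunkz A rs (P : seq A) : size (chunkz rs P) = size rs.
Proof. by elim: rs P => //= r rs IH P; rewrite IH. Qed.

Lemma zip_mapr (A B D : Type) (f : B -> D) (r : seq A) (X : seq B) :
  zip r (map f X) = map (fun e => (e.1, f e.2)) (zip r X).
Proof. by elim: r X => [|a r IH] [|b X] //=; rewrite IH. Qed.

Lemma chunkz_map A B (f : A -> B) rs (P : seq A) :
  chunkz rs (map f P) = map (map (fun e => (e.1, f e.2))) (chunkz rs P).
Proof. by elim: rs P => //= r rs IH P; rewrite -map_take -map_drop IH zip_mapr. Qed.

Lemma chunkz_flatten A (Ls : seq (seq (nat * A))) rs :
  map (map fst) Ls = rs -> chunkz rs (flatten (map (map snd) Ls)) = Ls.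
Proof.
elim: Ls rs => [|L Ls IH] [|r rs] //= [<- e].
have hs : size (map fst L) = size (map snd L) by rewrite !size_map.
rewrite hs take_size_cat // drop_size_cat // IH //.
by rewrite zip_unzip.
Qed.

Lemma flatten_chunkz A rs (P : seq A) :
  size P = sumn (map size rs) -> flatten (map (map snd) (chunkz rs P)) = P.
Proof.
elim: rs P => [|r rs IH] P /=; first by case: P.
move=> hs; rewrite -/(unzip2 _) unzip2_zip; last by rewrite size_take_min; lia.
by rewrite IH ?cat_take_drop // size_drop; lia.
Qed.

Lemma fst_chunkz A rs (P : seq A) :
  size P = sumn (map size rs) -> map (map fst) (chunkz rs P) = rs.
Proof.
elim: rs P => [|r rs IH] P //= hs.
rewrite -/(unzip1 _) unzip1_zip; last by rewrite size_take_min; lia.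
by rewrite IH // size_drop; lia.
Qed.

Lemma map_eq_in (A B : Type) (f g : A -> B) (s : seq A) :
  map f s = map g s <-> forall a, List.In a s -> f a = g a.
Proof.
elim: s => [|a s IH] /=; first by split.
split.
- case=> e1 /IH e2 b [<-|hb] //; exact: e2.
- by move=> H; rewrite (H a (or_introl erefl)); congr cons; apply/IH => b hb; apply: H; right.
Qed.

Lemma nth_map_filter (T U : Type) (d : T) (du : U) (f : T -> U) (P : pred T) (s : seq T) n :
  n < size s -> P (nth d s n) -> nth du (map f (filter P s)) (count P (take n s)) = f (nth d s n).
Proof.
elim: s n => [|a s IH] [|n] //= hn; first by move=> ->.
by case: (P a) => /= hp; rewrite IH.
Qed.

Set Implicit Arguments.
Unset Strict Implicit.
Unset Printing Implicit Defensive.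

Lemma ivt (f : nat -> nat) : f 0 = 0 -> (forall k, f k.+1 <= (f k).+1) ->
  forall n l, l <= f n -> exists i, i <= n /\ f i = l.
Proof.
move=> f0 fs; elim=> [|n IH] l hl; first by exists 0; split=> //; lia.
case: (leqP l (f n)) => h; first by case: (IH l h) => i [hi e]; exists i; split=> //; lia.
by exists n.+1; split=> //; have := fs n; lia.
Qed.

Lemma ivt_step (f : nat -> nat) : (forall k, f k.+1 <= (f k).+1) ->
  forall n l, f 0 <= l -> l < f n -> exists i, i < n /\ f i = l /\ f i.+1 = l.+1.
Proof.
move=> fs; elim=> [|n IH] l h0 hl; first by lia.
case: (ltnP l (f n)) => h; first by case: (IH l h0 h) => i [hi e]; exists i; split=> //; lia.
by exists n; split=> //; have := fs n; lia.
Qed.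

Section Fac.
Variable C : catData.
Unset Implicit Arguments.
Variable Cm : forall a b : Ob C, Hom a b -> Prop.
Variable Cp : forall c : Ob C, mmor c -> Prop.
Hypothesis Hfac : forall (c : Ob C) (a : mmor c),
  exists! fa : {x : Ob C & (Hom c x * mmor x)%type},
    [/\ Cm c (projT1 fa) (projT2 fa).1, Cp (projT1 fa) (projT2 fa).2 &
        a = mprecomp (projT2 fa).2 (projT2 fa).1].
Variable x : thOb C.
Variable fam : seq {y : thOb C & thHom x y}.
Set Implicit Arguments.

Local Notation m := (size x).

Definition key k := [seq dval (th_a (projT2 s)) k | s <- fam].
Definition step k := key k.+1 != key k.
Definition sg k := count step (iota 0 k).

Lemma keyE i j : key i = key j <-> forall s, List.In s fam ->
  dval (th_a (projT2 s)) i = dval (th_a (projT2 s)) j.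
Proof. exact: map_eq_in. Qed.

Lemma sg_split i d : sg (i + d) = sg i + count step (iota i d).
Proof. by rewrite /sg iotaD count_cat. Qed.

Lemma sgS k : sg k.+1 = sg k + step k.
Proof. by rewrite -addn1 sg_split /= addn0. Qed.

Lemma sg0 : sg 0 = 0.
Proof. by []. Qed.

Lemma sg_mono i j : i <= j -> sg i <= sg j.
Proof. by move=> hij; rewrite -(subnKC hij) sg_split leq_addr. Qed.

Lemma sg_step_le k : sg k.+1 <= (sg k).+1.
Proof. by rewrite sgS; case: (step k); lia. Qed.

Lemma count0_iota i d : (forall t, i <= t < i + d -> ~~ step t) -> count step (iota i d) = 0.
Proof.
elim: d i => [|d IH] i H //=.
rewrite IH; last by move=> t ht; apply: H; lia.
by rewrite (negbTE (H i _)) //; lia.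
Qed.

Lemma key_const i d : sg i = sg (i + d) -> key i = key (i + d).
Proof.
rewrite sg_split => e.
have H : forall t, i <= t < i + d -> ~~ step t.
  move=> t ht; apply/negP => st.
  have : 0 < count step (iota i d).
    by rewrite -has_count; apply/hasP; exists t => //; rewrite mem_iota.
  lia.
elim: d H {e} => [|d IH] H; first by rewrite addn0.
rewrite IH; last by move=> t ht; apply: H; lia.
have := H (i + d); rewrite addnS /step => /(_ _) /negPn /eqP -> //; lia.
Qed.

Lemma key_const' i j : sg i = sg j -> key i = key j.
Proof.
case: (leqP i j) => h e; first by rewrite -(subnKC h); apply: key_const; rewrite subnKC.
by rewrite -(subnKC (ltnW h)); symmetry; apply: key_const; rewrite subnKC ?e // ltnW.
Qed.

Lemma key_sig i d : i + d <= m -> key i = key (i + d) -> sg i = sg (i + d).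
Proof.
move=> hm /keyE e; rewrite sg_split count0_iota ?addn0 // => t ht.
apply/negPn/eqP/keyE => s hs.
have ht1 : t.+1 <= m by lia.
have ht2 : i <= t by lia.
have ht3 : t < i + d by lia.
have h1 := dval_mono (th_a (projT2 s)) (leqnSn t) ht1.
have h2 := dval_mono (th_a (projT2 s)) ht2 (ltnW ht1).
have h3 := dval_mono (th_a (projT2 s)) ht3 hm.
have := e s hs; lia.
Qed.

Lemma key_sig' i j : i <= m -> j <= m -> key i = key j -> sg i = sg j.
Proof.
move=> hi hj; case: (leqP i j) => h e.
  by rewrite -(subnKC h); apply: key_sig; rewrite subnKC // -e.
by rewrite -(subnKC (ltnW h)); symmetry; apply: key_sig; rewrite subnKC ?e // ltnW.
Qed.

Lemma sg_surj l : l <= sg m -> exists i, i <= m /\ sg i = l.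
Proof. exact: ivt sg0 sg_step_le m l. Qed.

Lemma step_at l : l < sg m -> exists i, i < m /\ step i /\ sg i = l.
Proof.
move=> hl; case: (ivt_step sg_step_le (n := m) (l := l)) => //.
move=> i [hi [e1 e2]]; exists i; split=> //; split=> //.
by move: e2; rewrite sgS e1; case: (step i) => //; lia.
Qed.

Lemma step_inj i i' : step i -> step i' -> sg i = sg i' -> i = i'.
Proof.
move=> s1 s2 e; case: (ltngtP i i') => // h.
- have := sg_mono h; rewrite sgS s1; lia.
- have := sg_mono h; rewrite sgS s2; lia.
Qed.

Definition sec l := find (fun i => sg i == l) (iota 0 m.+1).

Lemma sec_spec l : l <= sg m -> sec l <= m /\ sg (sec l) = l.
Proof.
move=> hl; have hh : has (fun i => sg i == l) (iota 0 m.+1).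
  case: (sg_surj hl) => i [hi e]; apply/hasP; exists i; first by rewrite mem_iota; lia.
  by apply/eqP.
have := hh; rewrite has_find size_iota => hs.
have := nth_find 0 hh; rewrite nth_iota // add0n => /eqP e.
by split=> //; lia.
Qed.

Lemma sec_mono l l' : l <= l' -> l' <= sg m -> sec l <= sec l'.
Proof.
move=> h hl'; have [s1 e1] := sec_spec (leq_trans h hl'); have [s2 e2] := sec_spec hl'.
rewrite leqNgt; apply/negP => hlt.
have := sg_mono (ltnW hlt); rewrite e1 e2 => h'.
have ell : l = l' by lia.
subst l'; lia.
Qed.

Definition facS (i : 'I_m) := constructive_indefinite_description _ (Hfac (obi x i) (TPlist fam i)).
Definition fac (i : 'I_m) := proj1_sig (facS i).
Definition mid i := projT1 (fac i).
Definition mmin i : Hom (obi x i) (mid i) := (projT2 (fac i)).1.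
Definition mpl i : mmor (mid i) := (projT2 (fac i)).2.

Lemma fac_spec i : [/\ Cm (obi x i) (mid i) (mmin i), Cp (mid i) (mpl i) &
        TPlist fam i = mprecomp (mpl i) (mmin i)].
Proof. exact: (proj1 (proj2_sig (facS i))). Qed.

Lemma fac_uniq i (fa : {w : Ob C & (Hom (obi x i) w * mmor w)%type}) :
  [/\ Cm (obi x i) (projT1 fa) (projT2 fa).1, Cp (projT1 fa) (projT2 fa).2 &
      TPlist fam i = mprecomp (projT2 fa).2 (projT2 fa).1] -> fac i = fa.
Proof. exact: (proj2 (proj2_sig (facS i))). Qed.

Lemma facE i : fac i = existT _ (mid i) (mmin i, mpl i).
Proof. by rewrite /mid /mmin /mpl; case: (fac i) => w [a b]. Qed.

Definition z : thOb C := [seq mid i | i : 'I_m <- enum 'I_m & step i].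

Lemma size_z : size z = sg m.
Proof.
rewrite /z size_map size_filter /sg.
transitivity (count step (map val (enum 'I_m))); first by rewrite count_map.
by rewrite val_enum_ord.
Qed.

Lemma zmid (i : 'I_m) : step i -> exists l : 'I_(size z), nat_of_ord l = sg i /\ obi z l = mid i.
Proof.
move=> si.
have hl : sg i < size z.
  by rewrite size_z; have := sg_mono (ltn_ord i); rewrite sgS si; lia.
exists (Ordinal hl); split=> //.
rewrite /obi (tnth_nth (mid i)) /= /z.
have hsi : (fun j : 'I_m => step j) (nth i (enum 'I_m) i) by rewrite nth_ord_enum.
have hsz : nat_of_ord i < size (enum 'I_m) by rewrite size_enum_ord.
have H := nth_map_filter (mid i) mid (P := fun j : 'I_m => step j) hsz hsi.
have e : count (fun j : 'I_m => step j) (take i (enum 'I_m)) = sg i.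
  transitivity (count step (map val (take i (enum 'I_m)))); first by rewrite count_map.
  rewrite map_take val_enum_ord take_iota /sg; congr (count _ (iota _ _)).
  have := ltn_ord i; lia.
by rewrite e nth_ord_enum in H.
Qed.

Definition rsI (i : nat) := [seq drange (th_a (projT2 s)) i | s <- fam].

Lemma TPlistE (i : 'I_m) : TPlist fam i = flatten (map (map snd) [seq enc_f (projT2 s) i | s <- fam]).
Proof. by rewrite /TPlist -map_comp. Qed.

Lemma size_TPlist (i : 'I_m) : size (TPlist fam i) = sumn (map size (rsI i)).
Proof.
rewrite TPlistE size_flatten /shape -!map_comp; congr sumn; apply: eq_map => s /=.
by rewrite size_map -(size_map fst) enc_fst.
Qed.

Lemma size_mpl (i : 'I_m) : size (mpl i) = sumn (map size (rsI i)).
Proof. by case: (fac_spec i) => _ _ e; rewrite -size_TPlist e size_map. Qed.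

Lemma proj_mpl (i : 'I_m) : map (fun p => projT1 p) (mpl i) = map (fun p => projT1 p) (TPlist fam i).
Proof. by case: (fac_spec i) => _ _ ->; rewrite /mprecomp -map_comp. Qed.

Lemma chunk_TP (i : 'I_m) : chunkz (rsI i) (TPlist fam i) = [seq enc_f (projT2 s) i | s <- fam].
Proof.
rewrite TPlistE chunkz_flatten //.
by rewrite /rsI -map_comp; apply: eq_map => s /=; rewrite enc_fst.
Qed.

Definition CHT (w : Ob C) := seq (seq (nat * {d : Ob C & Hom w d})).

Lemma CH_ex (l : 'I_(size z)) : exists CHl : CHT (obi z l), exists i : 'I_m,
  step i /\ sg i = l /\ existT CHT (obi z l) CHl = existT CHT (mid i) (chunkz (rsI i) (mpl i)).
Proof.
have hl : l < sg m by rewrite -size_z.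
case: (step_at hl) => i [hi [si ei]].
case: (zmid (i := Ordinal hi) si) => l' [el' ol'].
have ell : l' = l by apply: ord_inj; rewrite el' ei.
subst l'.
case: (@sigT_transport _ CHT _ _ ol' (chunkz (rsI i) (mpl (Ordinal hi)))) => CHl e.
by exists CHl, (Ordinal hi).
Qed.

Definition CH (l : 'I_(size z)) : CHT (obi z l) :=
  proj1_sig (constructive_indefinite_description _ (CH_ex l)).

Lemma CH_spec (l : 'I_(size z)) (i : 'I_m) : step i -> sg i = l ->
  existT CHT (obi z l) (CH l) = existT CHT (mid i) (chunkz (rsI i) (mpl i)).
Proof.
move=> si ei; case: (proj2_sig (constructive_indefinite_description _ (CH_ex l))) => i' [si' [ei' e]].
have ii : i' = i by apply: ord_inj; apply: step_inj => //; rewrite ei ei'.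
by subst i'; rewrite /CH.
Qed.

Lemma sg_le_z i : i <= m -> sg i <= size z.
Proof. by move=> hi; rewrite size_z; exact: sg_mono. Qed.

Definition sgm : dmor m (size z) :=
  @mk_dmor m (size z) sg (fun i j hij _ => sg_mono hij) sg_le_z.

Lemma dval_sgm k : k <= m -> dval sgm k = sg k.
Proof. exact: dval_mk. Qed.

Lemma drange_sgm (i : 'I_m) : drange sgm i = if step i then [:: sg i] else [::].
Proof.
rewrite /drange !dval_sgm //; last exact: ltnW.
by rewrite sgS; case: (step i) => /=; rewrite ?addn1 ?subSnn ?addn0 ?subnn.
Qed.

Definition Eh (i : 'I_m) : seq (nat * {d : Ob C & Hom (obi x i) d}) :=
  if step i then [:: (sg i, existT (fun d => Hom (obi x i) d) (mid i) (mmin i))] else [::].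

Lemma h_ex : exists h : thHom x z, th_a h = sgm /\ forall i, enc_f h i = Eh i.
Proof.
apply: thHom_build => i; rewrite /Eh.
  by rewrite drange_sgm; case: (step i).
case si: (step i); last by constructor.
constructor=> //; case: (zmid si) => l [el ol]; by exists l.
Qed.

Definition d0 : {y : thOb C & thHom x y} := existT _ x (thid x).
Local Notation sn n := (nth d0 fam n).

Lemma In_sn (n : nat) : n < size fam -> List.In (sn n) fam.
Proof. by move=> hn; apply/(In_nth d0); exists n. Qed.

Lemma al_sec s k : List.In s fam -> k <= m ->
  dval (th_a (projT2 s)) (sec (sg k)) = dval (th_a (projT2 s)) k.
Proof.
move=> hs hk; have [h1 h2] := sec_spec (sg_mono hk).
have := key_const' h2; move/keyE; apply; exact: hs.
Qed.

Definition Bn (n : nat) : dmor (size z) (size (projT1 (sn n))).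
Proof.
refine (@mk_dmor (size z) _ (fun l => dval (th_a (projT2 (sn n))) (sec l)) _ (fun _ _ => dval_le _ _)).
move=> l l' hll hl'; apply: dval_mono; first by apply: sec_mono => //; rewrite -size_z.
by have := sec_spec (l := l'); rewrite -size_z => /(_ hl') [].
Defined.

Lemma dval_Bn n l : l <= size z -> dval (Bn n) l = dval (th_a (projT2 (sn n))) (sec l).
Proof. exact: dval_mk. Qed.

Lemma drange_Bn n (i : 'I_m) (l : nat) : n < size fam -> step i -> sg i = l ->
  drange (Bn n) l = drange (th_a (projT2 (sn n))) i.
Proof.
move=> hn si ei.
have h1 : sg i.+1 = l.+1 by rewrite sgS si ei addn1.
have hl1 : l.+1 <= size z by rewrite -h1; exact: sg_le_z.
rewrite /drange !dval_Bn //; last exact: ltnW.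
by rewrite -h1 -ei !al_sec //; try exact: In_sn; exact: ltnW.
Qed.

Definition phiE (w : Ob C) (e : nat * {d : Ob C & Hom w d}) : nat * Ob C := (e.1, projT1 e.2).
Definition PsiL (w : Ob C) (L : CHT w) := map (map (@phiE w)) L.

Lemma step_of (l : 'I_(size z)) : exists i : 'I_m, step i /\ sg i = l.
Proof.
have hl : l < sg m by rewrite -size_z.
by case: (step_at hl) => i [hi [si ei]]; exists (Ordinal hi).
Qed.

Lemma CH_psi (l : 'I_(size z)) (i : 'I_m) : step i -> sg i = l ->
  PsiL (CH l) = [seq map (@phiE _) (enc_f (projT2 s) i) | s <- fam].
Proof.
move=> si ei; rewrite (@sigT_fun _ CHT _ PsiL _ _ _ _ (CH_spec si ei)) /PsiL.
rewrite -(@chunkz_map _ _ (fun p => projT1 p)) proj_mpl chunkz_map chunk_TP -map_comp //.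
Qed.

Lemma size_CH (l : 'I_(size z)) : size (CH l) = size fam.
Proof.
case: (step_of l) => i [si ei].
by rewrite -(size_map (map (@phiE _))) -/(PsiL _) (CH_psi si ei) size_map.
Qed.

Lemma CH_nth (l : 'I_(size z)) (i : 'I_m) n : step i -> sg i = l -> n < size fam ->
  map (@phiE _) (nth [::] (CH l) n) = map (@phiE _) (enc_f (projT2 (sn n)) i).
Proof.
move=> si ei hn; rewrite -(nth_map [::] [::]) ?size_CH // -/(PsiL _) (CH_psi si ei).
by rewrite (nth_map d0).
Qed.

Lemma Forall_ent_ok y (w w' : Ob C) (L : seq (nat * {d : Ob C & Hom w d}))
  (L' : seq (nat * {d : Ob C & Hom w' d})) :
  map (@phiE w) L = map (@phiE w') L' -> List.Forall (@ent_ok C y w') L' -> List.Forall (@ent_ok C y w) L.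
Proof.
move=> e HL'; apply/List.Forall_forall => a ha.
have : List.In (phiE a) (map (@phiE w') L') by rewrite -e; apply/In_map; exists a.
case/In_map => b [eb hb]; have := Forall_In HL' hb.
case=> j [hj hd]; exists j; split.
- by rewrite hj; have := f_equal fst eb.
- by rewrite -hd; have := f_equal snd eb.
Qed.

Lemma g_ex (n : 'I_(size fam)) : exists g : thHom z (projT1 (sn n)),
  th_a g = Bn n /\ forall l, enc_f g l = nth [::] (CH l) n.
Proof.
apply: thHom_build => l; case: (step_of l) => i [si ei].
- rewrite (drange_Bn _ si ei) // -enc_fst.
  have := CH_nth si ei (ltn_ord n); rewrite /phiE => /(f_equal (map fst)).
  by rewrite -!map_comp.
- apply: (@Forall_ent_ok (projT1 (sn n)) (obi z l) (obi x i) (nth [::] (CH l) n)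
     (enc_f (projT2 (sn n)) i)); last exact: enc_obj.
  exact: CH_nth si ei (ltn_ord n).
Qed.

Lemma In_mem (T : eqType) (a : T) (s : seq T) : a \in s -> List.In a s.
Proof. by elim: s => //= b s IH; rewrite in_cons => /orP [/eqP ->|/IH h]; [left|right]. Qed.

Lemma enum_nth (T : Type) (d : T) (s : seq T) k : size s = k ->
  [seq nth d s (nat_of_ord n) | n <- enum 'I_k] = s.
Proof.
move=> <-; rewrite (map_comp (nth d s) val) val_enum_ord.
by rewrite -/(mkseq (nth d s) (size s)) mkseq_nth.
Qed.

Definition FacP (fa : {w : thOb C & (thHom x w * seq {y : thOb C & thHom w y})%type}) : Prop :=
  [/\ ThetaMinus Cm (projT2 fa).1, ThetaPlus Cp (projT2 fa).2 &
      fam = mprecomp (C := ThetaC C) (projT2 fa).2 (projT2 fa).1].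

Section Given.
Variable h : thHom x z.
Variable gf : forall n : 'I_(size fam), thHom z (projT1 (sn n)).
Hypothesis hh : th_a h = sgm.
Hypothesis he : forall i, enc_f h i = Eh i.
Hypothesis gh : forall n, th_a (gf n) = Bn n.
Hypothesis ge : forall n l, enc_f (gf n) l = nth [::] (CH l) n.

Definition G : seq {y : thOb C & thHom z y} :=
  [seq existT (fun y => thHom z y) (projT1 (sn n)) (gf n) | n : 'I_(size fam) <- enum 'I_(size fam)].

Lemma th_f_h_step (i : 'I_m) : step i -> exists p, th_f h i = [:: p] /\ nat_of_ord (projT1 p) = sg i /\
  existT (fun w => Hom (obi x i) w) (obi z (projT1 p)) (projT2 p) = existT _ (mid i) (mmin i).
Proof.
move=> si; have := he i; rewrite /Eh si /enc_f.
case: (th_f h i) => [|p [|p' l]] //= [e1 e2].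
by exists p; split=> //; split.
Qed.

Lemma th_f_h_nstep (i : 'I_m) : ~~ step i -> th_f h i = [::].
Proof. by move=> si; have := he i; rewrite /Eh (negbTE si) /enc_f; case: (th_f h i). Qed.

Lemma minus_h : ThetaMinus Cm (h : Hom (x : Ob (ThetaC C)) z).
Proof.
split.
  apply/dsurj_dval => j; rewrite hh => hj; rewrite size_z in hj; case: (sg_surj hj) => i [hi ei].
  by exists i; split=> //; rewrite dval_sgm.
move=> i; case si: (step i); last by rewrite th_f_h_nstep ?si.
case: (th_f_h_step si) => p [-> [_ ep]]; constructor=> //.
case: (fac_spec i) => hc _ _.
exact: (@sigT_prop _ (fun w => Hom (obi x i) w) (fun w hh => Cm (obi x i) w hh) _ _ _ _ ep hc).
Qed.

Lemma In_G (n : 'I_(size fam)) : List.In (existT (fun y => thHom z y) (projT1 (sn n)) (gf n)) G.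
Proof. by apply/In_map; exists n; split=> //; apply: In_mem; rewrite mem_enum. Qed.

Lemma plus_G : ThetaPlus Cp (G : mmor (z : Ob (ThetaC C))).
Proof.
apply/ThetaPlusE; split.
- move=> l l' hl hl' E.
  have hk : key (sec l) = key (sec l').
    apply/keyE => s /(In_nth d0) [n [hn <-]].
    have := E _ (In_G (Ordinal hn)); rewrite /= gh !dval_Bn //.
  have h1 : l <= sg m by rewrite -size_z.
  have h2 : l' <= sg m by rewrite -size_z.
  have [s1 e1] := sec_spec h1; have [s2 e2] := sec_spec h2.
  by rewrite -e1 -e2; apply: key_sig'.
- move=> l; case: (step_of l) => i [si ei].
  have -> : TPlist G l = flatten (map (map snd) (CH l)).
    rewrite /TPlist /G -map_comp.
    rewrite -(enum_nth [::] (size_CH l)) -map_comp; congr flatten; apply: eq_map => n /=.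
    by rewrite ge.
  have e := @sigT_map _ CHT (fun w => mmor w) (fun w L => flatten (map (map snd) L)) _ _ _ _ (CH_spec si ei).
  rewrite /= flatten_chunkz in e; last by rewrite size_mpl.
  case: (fac_spec i) => _ hc _.
  exact: (@sigT_prop _ (fun w => mmor w) (fun w P => Cp w P) _ _ _ _ e hc).
Qed.

Lemma comp_eq (n : 'I_(size fam)) : projT2 (sn n) = thcomp (gf n) h.
Proof.
have hn := In_sn (ltn_ord n).
apply: thHom_ext => [k hk|i].
  rewrite th_a_comp dval_comp hh dval_sgm // gh dval_Bn; last exact: sg_le_z.
  by rewrite al_sec.
rewrite enc_comp; case si: (step i).
- case: (th_f_h_step si) => p [-> [ep1 ep2]] /=; rewrite cats0 ge.
  have ec := CH_spec (l := projT1 p) si (esym ep1).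
  have := @sigT_pair _ (fun w => Hom (obi x i) w) CHT _ _ _ _ _ _ ep2 ec.
  move/(@sigT_fun _ (fun w => (Hom (obi x i) w * CHT w)%type) _
     (fun w pr => [seq (q.1, existT (fun d => Hom (obi x i) d) (projT1 q.2) (comp (projT2 q.2) pr.1))
                   | q <- nth [::] pr.2 n]) _ _ _ _) => /= ->.
  rewrite -(nth_map [::] [::]); last by rewrite size_chunkz size_map.
  rewrite -(chunkz_map (fun p : {d : Ob C & Hom (mid i) d} =>
             existT (fun d => Hom (obi x i) d) (projT1 p) (comp (projT2 p) (mmin i)))).
  case: (fac_spec i) => _ _ ef; rewrite /mprecomp in ef; rewrite -ef chunk_TP.
  by rewrite (nth_map d0).
- rewrite th_f_h_nstep ?si //= /enc_f enc_nil //.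
  have := negbFE si; rewrite /step => /eqP /keyE /(_ _ hn) e.
  by rewrite /drange e subnn.
Qed.

Lemma fam_eq : fam = mprecomp (C := ThetaC C) G h.
Proof.
rewrite /mprecomp /G -map_comp.
have ef := enum_nth d0 (erefl (size fam)).
rewrite -{1}ef; apply: eq_map => n /=.
by rewrite -comp_eq; case: (sn n).
Qed.

Section Other.
Variable z' : thOb C.
Variable h' : thHom x z'.
Variable G' : seq {y : thOb C & thHom z' y}.
Hypothesis Hm' : ThetaMinus Cm (h' : Hom (x : Ob (ThetaC C)) z').
Hypothesis Hp' : ThetaPlus Cp (G' : mmor (z' : Ob (ThetaC C))).
Hypothesis Eq' : fam = mprecomp (C := ThetaC C) G' h'.

Let d0' : {y : thOb C & thHom z' y} := existT _ z' (thid z').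
Local Notation gn n := (nth d0' G' n).

Lemma sigT_etaE (A : Type) (P : A -> Type) (s : sigT P) a p :
  s = existT P a p -> existT P (projT1 s) (projT2 s) = existT P a p.
Proof. by case: s. Qed.

Lemma size_G' : size G' = size fam.
Proof. by rewrite Eq' size_map. Qed.

Lemma nth_fam n : n < size fam ->
  sn n = existT (fun y => thHom x y) (projT1 (gn n)) (thcomp (projT2 (gn n)) h').
Proof. by move=> hn; rewrite {1}Eq' /mprecomp (nth_map d0') // size_G'. Qed.

Lemma dval_fam n k : n < size fam ->
  dval (th_a (projT2 (sn n))) k = dval (th_a (projT2 (gn n))) (dval (th_a h') k).
Proof.
move=> hn; have := @sigT_fun _ (fun y => thHom x y) _ (fun y f => dval (th_a f) k) _ _ _ _ (sigT_etaE (nth_fam hn)).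
by rewrite /= dval_comp.
Qed.

Lemma enc_fam n (i : 'I_m) : n < size fam ->
  enc_f (projT2 (sn n)) i = enc_f (thcomp (projT2 (gn n)) h') i.
Proof.
move=> hn; exact: (@sigT_fun _ (fun y => thHom x y) _ (fun y f => enc_f f i) _ _ _ _ (sigT_etaE (nth_fam hn))).
Qed.

Lemma dval_h' k : k <= m -> dval (th_a h') k = sg k.
Proof.
case: Hm' => hs _ .
case/ThetaPlusE: Hp' => Pinj' _.
elim: k => [|k IH] hk; first by rewrite dval0_surj.
have IH' := IH (ltnW hk).
have h1 := dstep_surj hs hk.
have h2 := dval_mono (th_a h') (leqnSn k) hk.
have hb := dval_le (th_a h') k.+1.
rewrite sgS; case si: (step k).
- have : dval (th_a h') k != dval (th_a h') k.+1.
    apply/eqP => e; move: si; rewrite /step => /eqP; apply.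
    apply/keyE => s /(In_nth d0) [n [hn <-]].
    by rewrite !dval_fam // e.
  lia.
- suff : dval (th_a h') k = dval (th_a h') k.+1 by lia.
  apply: Pinj'; [exact: dval_le|exact: dval_le|].
  move=> s' /(In_nth d0') [n [hn <-]]; rewrite size_G' in hn.
  move: si; rewrite /step => /negbFE /eqP /keyE /(_ _ (In_sn hn)).
  by rewrite !dval_fam.
Qed.

Lemma size_z' : size z' = size z.
Proof. by case: Hm' => hs _; rewrite -(dvalm_surj hs) dval_h' // size_z. Qed.

Lemma TP_fam (i : 'I_m) (j' : 'I_(size z')) (hh' : Hom (obi x i) (obi z' j')) :
  th_f h' i = [:: existT _ j' hh'] -> TPlist fam i = mprecomp (TPlist G' j') hh'.
Proof.
move=> eh; rewrite /TPlist {1}Eq' /mprecomp -map_comp map_flatten -map_comp; congr flatten.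
apply: eq_map => s' /=; rewrite enc_comp eh /= cats0 -!map_comp //.
Qed.

Lemma fac_other (i : 'I_m) : step i -> exists (j' : 'I_(size z')) (hh' : Hom (obi x i) (obi z' j')),
  [/\ th_f h' i = [:: existT _ j' hh'], nat_of_ord j' = sg i &
      fac i = existT _ (obi z' j') (hh', TPlist G' j')].
Proof.
move=> si; case: Hm' => hs HF.
have dr : drange (th_a h') i = [:: sg i].
  rewrite /drange !dval_h' //; last exact: ltnW.
  by rewrite sgS si addn1 subSnn.
case: (enc_single dr) => j' [hh' [ej eh]].
exists j', hh'; split=> //.
apply: fac_uniq; split => /=.
- by have := HF i; rewrite eh => /List.Forall_forall /(_ _ (or_introl erefl)).
- by case/ThetaPlusE: Hp' => _; apply.
- exact: TP_fam.
Qed.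

Lemma z_eq : z' = z.
Proof.
apply: obi_list_eq; first exact: size_z'.
move=> l; case: (step_of l) => i [si ei].
case: (fac_other si) => j' [hh' [_ ej ef]].
exists j'; split; first by rewrite ej ei.
case: (zmid si) => l' [el' ol'].
have ll : l' = l by apply: ord_inj; rewrite el' ei.
subst l'; rewrite ol'.
by have := f_equal (@projT1 _ _) ef; rewrite facE.
Qed.

End Other.

Definition d0z : {y : thOb C & thHom z y} := existT _ z (thid z).

Lemma uniq_fac (fa : {w : thOb C & (thHom x w * seq {y : thOb C & thHom w y})%type}) :
  FacP fa -> existT (fun w => (thHom x w * seq {y : thOb C & thHom w y})%type) z (h, G) = fa.
Proof.
case: fa => z' [h' G'] [/= Hm' Hp' Eq'].
have ez := z_eq Hm' Hp' Eq'; subst z'.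
have eh : h' = h.
  apply: thHom_ext => [k hk|i]; first by rewrite (dval_h' Hm' Hp' Eq') // hh dval_sgm.
  rewrite he /Eh; case si: (step i).
  - case: (fac_other Hm' Hp' Eq' si) => j' [hh' [eh' ej ef]].
    rewrite /enc_f eh' /= /encp /= ej; congr [:: (_, _)].
    rewrite facE in ef.
    by have := @sigT_map _ _ _ (fun w (pr : (Hom (obi x i) w * mmor w)%type) => pr.1) _ _ _ _ ef.
  - rewrite /enc_f enc_nil //.
    rewrite /drange !(dval_h' Hm' Hp' Eq') //; last exact: ltnW.
    by rewrite sgS si addn0 subnn.
subst h'; congr existT; congr pair.
have sG : size G' = size fam by exact: size_G' Eq'.
apply: (@eq_from_nth _ d0z).
  by rewrite sG /G size_map size_enum_ord.
move=> n hn; rewrite /G size_map size_enum_ord in hn.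
set n' := Ordinal hn.
have RHS : nth d0z G n = existT _ (projT1 (sn n)) (gf n').
  rewrite /G (nth_map n') ?size_enum_ord //.
  by rewrite (nth_ord_enum n' n').
have ey : projT1 (nth d0z G' n) = projT1 (sn n).
  by rewrite (nth_fam Eq' hn).
have fb : forall l, l <= size z ->
    dval (th_a (projT2 (nth d0z G' n))) l = dval (th_a (projT2 (sn n))) (sec l).
  move=> l hl; have hl' : l <= sg m by rewrite -size_z.
  have [s1 e1] := sec_spec hl'.
  by rewrite (dval_fam Eq' _ hn) (dval_h' Hm' Hp' Eq') // e1.
have fc : forall l : 'I_(size z), enc_f (projT2 (nth d0z G' n)) l = nth [::] (CH l) n'.
  move=> l; case: (step_of l) => i [si ei].
  case: (fac_other Hm' Hp' Eq' si) => j' [hh' [eh' ej ef]].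
  have ejl : j' = l by apply: ord_inj; rewrite ej ei.
  subst j'; rewrite facE in ef.
  have e1 := @sigT_map _ _ CHT (fun w (pr : (Hom (obi x i) w * mmor w)%type) => chunkz (rsI i) pr.2) _ _ _ _ ef.
  have e2 := CH_spec si ei.
  have e3 := inj_pair2 _ _ _ _ _ (etrans e2 e1).
  rewrite /= in e3; rewrite e3 /TPlist.
  rewrite (_ : flatten _ = flatten (map (map snd) [seq enc_f (projT2 s') l | s' <- G'])); last first.
    by rewrite -map_comp.
  rewrite chunkz_flatten; first by rewrite (nth_map d0z) // (size_G' Eq').
  rewrite -map_comp /rsI; apply: (@eq_from_nth _ [::]); first by rewrite !size_map (size_G' Eq').
  move=> n2; rewrite size_map (size_G' Eq') => hn2.
  rewrite (nth_map d0z) ?(size_G' Eq') // (nth_map d0) //= enc_fst.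
  have E1 : nat_of_ord l = dval (th_a h) i by rewrite hh dval_sgm ?ei //; exact: ltnW.
  have E2 : (nat_of_ord l).+1 = dval (th_a h) i.+1 by rewrite hh dval_sgm // sgS si ei addn1.
  by rewrite /drange E2 E1 -!(dval_fam Eq' _ hn2).
rewrite RHS; move: ey fb fc; case: (nth d0z G' n) => y' g' /= ey fb fc; subst y'.
congr existT; apply: thHom_ext => [l hl|l]; first by rewrite fb // gh dval_Bn.
by rewrite fc; exact: (ge n' l).
Qed.

End Given.

Lemma theta_fac : exists! fa : {w : thOb C & (thHom x w * seq {y : thOb C & thHom w y})%type}, FacP fa.
Proof.
case: h_ex => h [hh he].
case: (dep_choice g_ex) => gf gfs.
have gh : forall n, th_a (gf n) = Bn n by move=> n; case: (gfs n).
have ge : forall n l, enc_f (gf n) l = nth [::] (CH l) n by move=> n; case: (gfs n).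
exists (existT _ z (h, G gf)); split.
  split; [exact: minus_h hh he|exact: plus_G gh ge|exact: fam_eq hh he gh ge].
move=> fa Hfa; exact: (uniq_fac hh he gh ge Hfa).
Qed.

End Fac.

Unset Implicit Arguments.

Theorem mainTheorem2 (C : catData) (Cm : forall a b : Ob C, Hom a b -> Prop)
  (Cp : forall c : Ob C, mmor c -> Prop) (deg : Ob C -> nat) :
  is_multi_reedy Cm Cp deg ->
  is_multi_reedy (ThetaMinus Cm) (ThetaPlus Cp) (theta_deg deg) /\
  exists (Rm Rp : forall a b : Ob (ThetaC C), Hom a b -> Prop)
         (d : Ob (ThetaC C) -> nat), is_reedy Rm Rp d.
Proof.
case=> Hcat Hm Hp Hfac [HC1 HC2 HC3].
have TM : is_multi_reedy (ThetaMinus Cm) (ThetaPlus Cp) (theta_deg deg).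
  split.
  - exact: theta_is_category Hcat.
  - exact: theta_minus_wide Hm.
  - exact: theta_plus_wide Hp.
  - move=> x fam; exact: (theta_fac Hfac fam).
  - split.
    + move=> x fam hp; exact: (plus_deg HC1 hp).
    + move=> x y f hp; exact: (plus_identity HC1 HC2 hp).
    + move=> x y f hm; exact: (minus_deg HC3 hm).
split=> //.
by exists (ThetaMinus Cm), (fun a b f => ThetaPlus Cp [:: existT (fun e => Hom a e) b f]), (theta_deg deg);
  exact: multi_to_reedy.
Qed.
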